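(* Consider the VRD$^2$ algorithm with constant step-size $\mu>0$, as defined in the context, under the standing assumptions listed there. There exists $\bar\mu>0$ such that for every $0<\mu\le\bar\mu$ there is a constant $C<\infty$ (independent of $i$) with $$\mathbb{E}\,\|w_{i,k}-w^\star_k\|^2\le\rho^iC\qquad\text{for all agents }k\text{ and all }i>0,$$ where $w^\star=\mathrm{col}\{w^\star_1,\dots,w^\star_K\}$ is the minimizer of $R$ and $$\rho=\max\Big(1-\frac{1-\lambda}{2N},\;1-\frac{\mu\nu}{4}\Big).$$
   Context: Data and risk. There are $N$ data pairs $(h_n,\gamma_n)$, $n=1,\dots,N$, with $h_n\in\mathbb{R}^M$ and scalar labels $\gamma_n$. The feature vector and the parameter are partitioned into $K$ blocks, $h_n=\mathrm{col}\{h_{n,1},\dots,h_{n,K}\}$, $w=\mathrm{col}\{w_1,\dots,w_K\}$ with $h_{n,k},w_k\in\mathbb{R}^{M_k}$, $\sum_k M_k=M$; block $k$ is held by agent $k$. The empirical risk is $$R(w)=\frac1N\sum_{n=1}^N Q\Big(\sum_{k=1}^K h_{n,k}^{\mathsf T}w_k;\gamma_n\Big)+\sum_{k=1}^K r_k(w_k),$$ where $Q(\cdot;\gamma):\mathbb{R}\to\mathbb{R}$ is differentiable with derivative $\nabla_z Q(z;\gamma)$, and $r(w)=\sum_k r_k(w_k)$. Assumptions. (i) For every $n$, the map $w\mapsto Q(h_n^{\mathsf T}w;\gamma_n)$ has $L$-Lipschitz gradient, i.e. $\|\nabla_zQ(h_n^{\mathsf T}w_1;\gamma_n)h_n-\nabla_zQ(h_n^{\mathsf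 T}w_2;\gamma_n)h_n\|\le L\|w_1-w_2\|$, and $|\nabla_zQ(z_1;\gamma_n)-\nabla_zQ(z_2;\gamma_n)|\le\delta|z_1-z_2|$ for all $z_1,z_2$, with $L,\delta>0$. (ii) $r$ is convex with $\eta$-Lipschitz gradient. (iii) $R$ is $\nu$-strongly convex: $(\nabla R(w_1)-\nabla R(w_2))^{\mathsf T}(w_1-w_2)\ge\nu\|w_1-w_2\|^2$; $w^\star$ denotes its unique minimizer. (iv) Agents communicate over a strongly connected graph with combination matrix $A=[a_{\ell k}]\in\mathbb{R}^{K\times K}$, nonnegative, with $a_{\ell k}>0$ only if $\ell=k$ or $\ell$ is a neighbor of $k$ ($\ell\in\mathcal N_k$, where $\mathcal N_k$ includes $k$), $A=A^{\mathsf T}$, $A\mathbf 1_K=\mathbf 1_K$, and $a_{kk}>0$ for at least one $k$. $\lambda\in(0,1)$ denotes the second largest magnitude of the eigenvalues of $A$. VRD$^2$ algorithm (variance-reduced dynamic diffusion). Each agent $k$ stores $w_{i,k}$ and scalar tables $u^i_{n,k},v^i_{n,k}$, $n=1,\dots,N$, initialized $w_{1,k}=0$, $u^1_{n,k}=v^1_{n,k}=0$. At each iteration $i=1,2,\dots$ an index $n_i$ is drawn uniformly from $\{1,\dots,N\}$, independently of the past, and the same $n_i$ is used by all agents. Agent $k$ computes $$z_{n_i,k}=\sum_{\ell\in\mathcal N_k}a_{\ell k}\big(u^i_{n_i,\ell}+Kh_{n_i,\ell}^{\mathsf T}w_{i,\ell}-v^i_{n_i,\ell}\big),$$ $$w_{i+1,k}=w_{i,k}-\mu\Big\{\big[\nabla_zQ(z_{n_i,k};\gamma_{n_i})-\nabla_zQ(u^i_{n_i,k};\gamma_{n_i})\big]h_{n_i,k}+\frac1N\sum_{n=1}^N\nabla_zQ(u^i_{n,k};\gamma_n)h_{n,k}+\nabla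 r_k(w_{i,k})\Big\},$$ then sets $u^{i+1}_{n_i,k}=z_{n_i,k}$, $v^{i+1}_{n_i,k}=Kh_{n_i,k}^{\mathsf T}w_{i,k}$, and $u^{i+1}_{n,k}=u^i_{n,k}$, $v^{i+1}_{n,k}=v^i_{n,k}$ for $n\ne n_i$. (This is the PVRD$^2$ algorithm with pipeline depth $J=1$.) *)

(* Defs.v *)
From Stdlib Require Import Reals Lra Lia Arith.
Open Scope R_scope.

(* Conventions: all indices are 0-based.  Data index n ranges over 0..N-1,
   agents/blocks k over 0..K-1, coordinates j of block k over 0..M k - 1.
   A block vector w in R^M = col{w_1,...,w_K} is represented as
   w : nat -> nat -> R with w k j the j-th coordinate of block k;
   only coordinates k < K, j < M k are meaningful. *)

Fixpoint fsum (n : nat) (f : nat -> R) : R :=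
  match n with
  | O => 0
  | S m => fsum m f + f m
  end.

Definition vec := nat -> R.
Definition bvec := nat -> nat -> R.

Definition dotb (m : nat) (x y : vec) : R := fsum m (fun j => x j * y j).

Definition dotf (K : nat) (M : nat -> nat) (x y : bvec) : R :=
  fsum K (fun k => dotb (M k) (x k) (y k)).

Definition normf (K : nat) (M : nat -> nat) (x : bvec) : R := sqrt (dotf K M x x).

Definition bsub (x y : bvec) : bvec := fun k j => x k j - y k j.

Definition blocksq (m : nat) (x y : vec) : R :=
  fsum m (fun j => (x j - y j) * (x j - y j)).

Definition hTw (K : nat) (M : nat -> nat) (hn : bvec) (w : bvec) : R := dotf K M hn w.

Definition rfull (K : nat) (r : nat -> vec -> R) (w : bvec) : R :=
  fsum K (fun k => r k (w k)).

Definition Rrisk (N K : nat) (M : nat -> nat) (h : nat -> bvec) (gam : nat -> R)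
  (Q : R -> R -> R) (r : nat -> vec -> R) (w : bvec) : R :=
  / INR N * fsum N (fun n => Q (hTw K M (h n) w) (gam n)) + rfull K r w.

Definition gradR (N K : nat) (M : nat -> nat) (h : nat -> bvec) (gam : nat -> R)
  (dQ : R -> R -> R) (gr : nat -> vec -> vec) (w : bvec) : bvec :=
  fun k j => / INR N * fsum N (fun n => dQ (hTw K M (h n) w) (gam n) * h n k j)
             + gr k (w k) j.

Definition is_block_gradient (m : nat) (f : vec -> R) (g : vec -> vec) : Prop :=
  forall x d : vec,
    derivable_pt_lim (fun t => f (fun j => x j + t * d j)) 0 (dotb m (g x) d).

Inductive reach_in (K : nat) (E : nat -> nat -> Prop) : nat -> nat -> Prop :=
  | reach_refl : forall x, reach_in K E x x
  | reach_step : forall x y z, (y < K)%nat -> E x y -> reach_in K E y z ->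
                 reach_in K E x z.

Definition strongly_connected (K : nat) (E : nat -> nat -> Prop) : Prop :=
  forall k l, (k < K)%nat -> (l < K)%nat -> reach_in K E k l.

Definition orth_eigenbasis (K : nat) (A : nat -> nat -> R)
  (V : nat -> nat -> R) (e : nat -> R) : Prop :=
  (forall i l, (i < K)%nat -> (l < K)%nat ->
     fsum K (fun k => A l k * V i k) = e i * V i l) /\
  (forall i i', (i < K)%nat -> (i' < K)%nat ->
     fsum K (fun l => V i l * V i' l) = if Nat.eqb i i' then 1 else 0).

(* lam is the second largest magnitude of the eigenvalues (counted with
   multiplicity) of the symmetric K x K matrix A: listing the eigenvalues
   e_0..e_{K-1} of an orthonormal eigen-decomposition, and removing one
   eigenvalue e_p of largest magnitude, lam is the largest magnitude among
   the remaining ones. *)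
Definition second_largest_eig_mag (K : nat) (A : nat -> nat -> R) (lam : R) : Prop :=
  exists (V : nat -> nat -> R) (e : nat -> R) (p : nat),
    orth_eigenbasis K A V e /\ (p < K)%nat /\
    (forall i, (i < K)%nat -> Rabs (e i) <= Rabs (e p)) /\
    (exists q, (q < K)%nat /\ q <> p /\ Rabs (e q) = lam) /\
    (forall i, (i < K)%nat -> i <> p -> Rabs (e i) <= lam).

Record vrd_state := mkState {
  st_w : bvec;
  st_u : nat -> nat -> R;      (* u^i_{n,k} = st_u n k *)
  st_v : nat -> nat -> R       (* v^i_{n,k} = st_v n k *)
}.

Definition vrd_init : vrd_state :=
  mkState (fun _ _ => 0) (fun _ _ => 0) (fun _ _ => 0).

(* One iteration with sampled index n = n_i.  Since a_{lk} = 0 for l not in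
   N_k, the sum over N_k equals the sum over all l < K. *)
Definition vrd_step (N K : nat) (M : nat -> nat) (A : nat -> nat -> R)
  (h : nat -> bvec) (gam : nat -> R) (dQ : R -> R -> R)
  (gr : nat -> vec -> vec) (mu : R) (x : vrd_state) (n : nat) : vrd_state :=
  let z := fun k => fsum K (fun l =>
             A l k * (st_u x n l + INR K * dotb (M l) (h n l) (st_w x l)
                      - st_v x n l)) in
  mkState
    (fun k j => st_w x k j - mu *
        ((dQ (z k) (gam n) - dQ (st_u x n k) (gam n)) * h n k j
         + / INR N * fsum N (fun n' => dQ (st_u x n' k) (gam n') * h n' k j)
         + gr k (st_w x k) j))
    (fun n' k => if Nat.eqb n' n then z k else st_u x n' k)
    (fun n' k => if Nat.eqb n' n then INR K * dotb (M k) (h n k) (st_w x k)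
                 else st_v x n' k).

(* vrd_iter m s = state after m iterations, i.e. (w_{m+1}, u^{m+1}, v^{m+1}),
   when the sampled indices are n_1 = s 1, ..., n_m = s m. *)
Fixpoint vrd_iter (N K : nat) (M : nat -> nat) (A : nat -> nat -> R)
  (h : nat -> bvec) (gam : nat -> R) (dQ : R -> R -> R)
  (gr : nat -> vec -> vec) (mu : R) (m : nat) (s : nat -> nat) : vrd_state :=
  match m with
  | O => vrd_init
  | S m' => vrd_step N K M A h gam dQ gr mu
              (vrd_iter N K M A h gam dQ gr mu m' s) (s (S m'))
  end.

Definition upd (s : nat -> nat) (p n : nat) : nat -> nat :=
  fun j => if Nat.eqb j p then n else s j.

(* expect N m F = E[F(n_1,...,n_m)] where n_1,...,n_m are i.i.d. uniform on
   {0,...,N-1}; F must only depend on s 1, ..., s m. *)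
Fixpoint expect (N : nat) (m : nat) (F : (nat -> nat) -> R) : R :=
  match m with
  | O => F (fun _ => O)
  | S m' => / INR N * fsum N (fun n => expect N m' (fun s => F (upd s (S m') n)))
  end.

(* Main.v *)
Require Import Defs.
From Stdlib Require Import Reals Lra Lia Psatz FunctionalExtensionality.
From mathcomp Require all_boot all_algebra Rstruct.
Open Scope R_scope.

Lemma fsum_ext n f g : (forall i, (i < n)%nat -> f i = g i) -> fsum n f = fsum n g.
Proof. induction n; simpl; intros H; [reflexivity|]. rewrite IHn by (intros; apply H; lia). rewrite H by lia. reflexivity. Qed.

Lemma fsum_add n f g : fsum n (fun i => f i + g i) = fsum n f + fsum n g.
Proof. induction n; simpl; [lra|]. rewrite IHn; lra. Qed.

Lemma fsum_sub n f g : fsum n (fun i => f i - g i) = fsum n f - fsum n g.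
Proof. induction n; simpl; [lra|]. rewrite IHn; lra. Qed.

Lemma fsum_scal n c f : fsum n (fun i => c * f i) = c * fsum n f.
Proof. induction n; simpl; [lra|]. rewrite IHn; lra. Qed.

Lemma fsum_scalr n c f : fsum n (fun i => f i * c) = fsum n f * c.
Proof. induction n; simpl; [lra|]. rewrite IHn; lra. Qed.

Lemma fsum_zero n : fsum n (fun _ => 0) = 0.
Proof. induction n; simpl; [lra|]. rewrite IHn; lra. Qed.

Lemma fsum_const n c : fsum n (fun _ => c) = INR n * c.
Proof. induction n; simpl fsum; [simpl; lra|]. rewrite IHn, S_INR; lra. Qed.

Lemma fsum_le n f g : (forall i, (i < n)%nat -> f i <= g i) -> fsum n f <= fsum n g.
Proof. induction n; simpl; intros H; [lra|]. assert (f n <= g n) by (apply H; lia).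
  assert (fsum n f <= fsum n g) by (apply IHn; intros; apply H; lia). lra. Qed.

Lemma fsum_nonneg n f : (forall i, (i < n)%nat -> 0 <= f i) -> 0 <= fsum n f.
Proof. intros H. rewrite <- (fsum_zero n). apply fsum_le. exact H. Qed.

Lemma fsum_swap n m (f : nat -> nat -> R) :
  fsum n (fun i => fsum m (fun j => f i j)) = fsum m (fun j => fsum n (fun i => f i j)).
Proof. induction n; simpl. - rewrite fsum_zero; reflexivity.
  - rewrite IHn. rewrite <- fsum_add. reflexivity. Qed.

Lemma fsum_term n f p : (p < n)%nat -> (forall i, (i < n)%nat -> 0 <= f i) -> f p <= fsum n f.
Proof. induction n; intros Hp H; [lia|]. simpl. destruct (Nat.eq_dec p n).
  - subst. assert (0 <= fsum n f) by (apply fsum_nonneg; intros; apply H; lia). lra.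
  - assert (f p <= fsum n f) by (apply IHn; [lia| intros; apply H; lia]).
    assert (0 <= f n) by (apply H; lia). lra. Qed.

Lemma fsum_single n f a p : (p < n)%nat ->
  fsum n (fun i => if Nat.eqb i p then a else f i) = fsum n f - f p + a.
Proof. induction n; intros Hp; [lia|]. simpl. destruct (Nat.eq_dec p n).
  - subst. rewrite Nat.eqb_refl.
    rewrite (fsum_ext n _ f). lra. intros i Hi. destruct (Nat.eqb_spec i n); [lia|reflexivity].
  - rewrite IHn by lia. destruct (Nat.eqb_spec n p); [lia|]. lra. Qed.

Lemma fsum_eq0 n f : (forall i, (i < n)%nat -> 0 <= f i) -> fsum n f = 0 ->
  forall p, (p < n)%nat -> f p = 0.
Proof. intros H H0 p Hp. assert (f p <= fsum n f) by (apply fsum_term; auto).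
  assert (0 <= f p) by auto. lra. Qed.

Lemma quad_disc a b c : 0 <= a -> (forall t, 0 <= a * t * t - 2 * b * t + c) -> b * b <= a * c.
Proof. intros Ha H. destruct (Req_dec a 0) as [Ha0|Ha0].
  - subst. destruct (Req_dec b 0). subst; lra.
    specialize (H ((c + 1) / (2 * b))). replace (0 * ((c + 1) / (2 * b)) * ((c + 1) / (2 * b)) - 2 * b * ((c + 1) / (2 * b)) + c) with (-1) in H by (field; auto). lra.
  - specialize (H (b / a)). assert (0 < a) by lra.
    assert (0 <= (a * c - b * b) / a) by (replace ((a*c - b*b)/a) with (a * (b/a) * (b/a) - 2 * b * (b/a) + c) by (field; lra); exact H).
    apply Rmult_le_reg_r with (/a). apply Rinv_0_lt_compat; lra.
    unfold Rdiv in H1. lra. Qed.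


Lemma sqnn r : 0 <= r * r.
Proof. pose proof (Rle_0_sqr r). unfold Rsqr in H. exact H. Qed.

Lemma quad_expand n x y t : fsum n (fun i => (t * x i - y i) * (t * x i - y i)) =
  fsum n (fun i => x i * x i) * t * t - 2 * fsum n (fun i => x i * y i) * t + fsum n (fun i => y i * y i).
Proof. induction n; simpl; [ring|]. rewrite IHn; ring. Qed.

Lemma CS n x y : fsum n (fun i => x i * y i) * fsum n (fun i => x i * y i)
  <= fsum n (fun i => x i * x i) * fsum n (fun i => y i * y i).
Proof. apply quad_disc. apply fsum_nonneg; intros; apply sqnn.
  intros t. rewrite <- quad_expand. apply fsum_nonneg; intros; apply sqnn. Qed.

Definition dsum (K : nat) (M : nat -> nat) (F : nat -> nat -> R) : R :=
  fsum K (fun k => fsum (M k) (F k)).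

Lemma dsum_ext K M F G : (forall k j, (k < K)%nat -> (j < M k)%nat -> F k j = G k j) -> dsum K M F = dsum K M G.
Proof. intros H. unfold dsum. apply fsum_ext; intros k Hk. apply fsum_ext; intros; auto. Qed.
Lemma dsum_add K M F G : dsum K M (fun k j => F k j + G k j) = dsum K M F + dsum K M G.
Proof. unfold dsum. rewrite <- fsum_add. apply fsum_ext; intros. apply fsum_add. Qed.
Lemma dsum_sub K M F G : dsum K M (fun k j => F k j - G k j) = dsum K M F - dsum K M G.
Proof. unfold dsum. rewrite <- fsum_sub. apply fsum_ext; intros. apply fsum_sub. Qed.
Lemma dsum_scal K M c F : dsum K M (fun k j => c * F k j) = c * dsum K M F.
Proof. unfold dsum. rewrite <- fsum_scal. apply fsum_ext; intros. apply fsum_scal. Qed.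
Lemma dsum_le K M F G : (forall k j, (k < K)%nat -> (j < M k)%nat -> F k j <= G k j) -> dsum K M F <= dsum K M G.
Proof. intros H. unfold dsum. apply fsum_le; intros k Hk. apply fsum_le; intros; auto. Qed.
Lemma dsum_nonneg K M F : (forall k j, (k < K)%nat -> (j < M k)%nat -> 0 <= F k j) -> 0 <= dsum K M F.
Proof. intros H. unfold dsum. apply fsum_nonneg; intros k Hk. apply fsum_nonneg; intros; auto. Qed.

Lemma dquad_expand K M x y t : dsum K M (fun k j => (t * x k j - y k j) * (t * x k j - y k j)) =
  dsum K M (fun k j => x k j * x k j) * t * t - 2 * dsum K M (fun k j => x k j * y k j) * t + dsum K M (fun k j => y k j * y k j).
Proof. unfold dsum. induction K; simpl; [ring|]. rewrite IHK, quad_expand; ring. Qed.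

Lemma dCS K M x y : dsum K M (fun k j => x k j * y k j) * dsum K M (fun k j => x k j * y k j)
  <= dsum K M (fun k j => x k j * x k j) * dsum K M (fun k j => y k j * y k j).
Proof. apply quad_disc. apply dsum_nonneg; intros; apply sqnn.
  intros t. rewrite <- dquad_expand. apply dsum_nonneg; intros; apply sqnn. Qed.

Lemma dotf_dsum K M x y : dotf K M x y = dsum K M (fun k j => x k j * y k j).
Proof. reflexivity. Qed.

Lemma jensen n f : fsum n f * fsum n f <= INR n * fsum n (fun i => f i * f i).
Proof. pose proof (CS n f (fun _ => 1)) as H. cbv beta in H.
  rewrite (fsum_ext n (fun i => f i * 1) f) in H by (intros; ring).
  rewrite (fsum_ext n (fun _ => 1 * 1) (fun _ => 1)) in H by (intros; ring).
  rewrite fsum_const in H. lra. Qed.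

Lemma young_sq a b e : 0 < e -> (a + b) * (a + b) <= (1 + e) * (a * a) + (1 + / e) * (b * b).
Proof. intros He. 
  assert (0 <= (e * a - b) * (e * a - b) / e) by (apply Rmult_le_pos; [apply sqnn| left; apply Rinv_0_lt_compat; lra]).
  replace ((1 + e) * (a * a) + (1 + / e) * (b * b)) with ((a+b)*(a+b) + (e * a - b) * (e * a - b) / e) by (field; lra).
  lra. Qed.

Lemma fsum_shift_sq n y m : fsum n (fun i => (y i - m) * (y i - m)) =
  fsum n (fun i => y i * y i) - 2 * m * fsum n y + INR n * m * m.
Proof. induction n; simpl fsum. simpl; ring. rewrite IHn, S_INR. ring. Qed.

Lemma fsum_centered n y : (0 < n)%nat ->
  fsum n (fun i => (y i - / INR n * fsum n y) * (y i - / INR n * fsum n y)) <= fsum n (fun i => y i * y i).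
Proof. intros Hn. rewrite fsum_shift_sq. set (m := / INR n * fsum n y).
  assert (Hs : fsum n y = INR n * m). { unfold m. field. apply not_0_INR; lia. }
  rewrite Hs. assert (0 <= INR n * m * m). { rewrite Rmult_assoc. apply Rmult_le_pos; [apply pos_INR|apply sqnn]. }
  lra. Qed.

Module MCpart.
Import all_boot all_algebra Rstruct.
Import GRing.Theory.
Local Open Scope ring_scope.

Lemma fsum_big (n : nat) (f : nat -> R) : fsum n f = (\sum_(i < n) f i).
Proof.
elim: n => [|n IH] /=; first by rewrite big_ord0.
by rewrite big_ord_recr /= IH.
Qed.

Lemma orth_complete (K : nat) (V : nat -> nat -> R) :
  (forall i i', lt i K -> lt i' K ->
     fsum K (fun l => Rmult (V i l) (V i' l)) = if Nat.eqb i i' then R1 else R0) ->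
  forall l l', lt l K -> lt l' K ->
     fsum K (fun i => Rmult (V i l) (V i l')) = if Nat.eqb l l' then R1 else R0.
Proof.
move=> H l l' Hl Hl'.
pose W : 'M[R]_K := (\matrix_(i < K, j < K) V i j).
have HW : (W *m W^T = 1%:M).
  apply/matrixP => i j; rewrite !mxE.
  have := H i j (ssrnat.ltP (ltn_ord i)) (ssrnat.ltP (ltn_ord j)); rewrite fsum_big => E.
  transitivity (\sum_(k < K) (V i k * V j k)).
    by apply: eq_bigr => k _; rewrite !mxE.
  rewrite E. case: (PeanoNat.Nat.eqb_spec i j) => [/val_inj ->|ne]; first by rewrite eqxx.
  by case: eqP => // e; case: ne; rewrite e.
have HW2 := mulmx1C HW.
have /matrixP/(_ (Ordinal (introT ssrnat.ltP Hl)) (Ordinal (introT ssrnat.ltP Hl'))) := HW2.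
rewrite !mxE fsum_big /= => E.
transitivity (\sum_(k < K) (V k l * V k l')); first by [].
rewrite -[RHS]/(if Nat.eqb l l' then 1 else 0).
rewrite -[LHS](_ : \sum_(k < K) (W^T (Ordinal (introT ssrnat.ltP Hl)) k * W k (Ordinal (introT ssrnat.ltP Hl'))) = _); last first.
  by apply: eq_bigr => k _; rewrite !mxE.
rewrite E. case: eqP => [/(congr1 val) /= ->|ne]; first by rewrite PeanoNat.Nat.eqb_refl.
case: (PeanoNat.Nat.eqb_spec l l') => // e; case: ne; exact: val_inj.
Qed.
End MCpart.

Lemma fsum_delta n f p : (p < n)%nat -> fsum n (fun i => f i * (if Nat.eqb i p then 1 else 0)) = f p.
Proof. intros Hp. rewrite (fsum_ext n _ (fun i => if Nat.eqb i p then f p else 0)).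
  rewrite fsum_single by auto. rewrite fsum_zero; ring.
  intros i Hi. destruct (Nat.eqb_spec i p); subst; ring. Qed.

Lemma fsum_sq n g : fsum n g * fsum n g = fsum n (fun i => fsum n (fun i' => g i * g i')).
Proof. rewrite <- fsum_scalr. apply fsum_ext; intros. rewrite <- fsum_scal. reflexivity. Qed.

Section Spectral.
Variables (K : nat) (V : nat -> nat -> R).
Hypothesis Horth : forall i i', (i < K)%nat -> (i' < K)%nat ->
     fsum K (fun l => V i l * V i' l) = if Nat.eqb i i' then 1 else 0.

Lemma complete_expand y l : (l < K)%nat ->
  fsum K (fun i => fsum K (fun l' => y l' * V i l') * V i l) = y l.
Proof. intros Hl.
  transitivity (fsum K (fun l' => y l' * fsum K (fun i => V i l' * V i l))).
  - rewrite (fsum_ext K _ (fun i => fsum K (fun l' => y l' * (V i l' * V i l)))).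
    + rewrite fsum_swap. apply fsum_ext; intros. rewrite <- fsum_scal. reflexivity.
    + intros. rewrite <- fsum_scalr. apply fsum_ext; intros; ring.
  - rewrite (fsum_ext K _ (fun l' => y l' * (if Nat.eqb l' l then 1 else 0))).
    apply fsum_delta; auto.
    intros l' Hl'. f_equal. apply MCpart.orth_complete; auto.
Qed.

Lemma parseval_gen d : fsum K (fun k => fsum K (fun i => d i * V i k) * fsum K (fun i => d i * V i k))
  = fsum K (fun i => d i * d i).
Proof.
  transitivity (fsum K (fun i => fsum K (fun i' => d i * d i' * fsum K (fun k => V i k * V i' k)))).
  - rewrite (fsum_ext K _ (fun k => fsum K (fun i => fsum K (fun i' => d i * d i' * (V i k * V i' k))))).
    + rewrite fsum_swap. apply fsum_ext; intros i Hi. rewrite fsum_swap. apply fsum_ext; intros i' Hi'.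
      rewrite fsum_scal. reflexivity.
    + intros k Hk. rewrite fsum_sq. apply fsum_ext; intros; apply fsum_ext; intros; ring.
  - apply fsum_ext; intros i Hi. rewrite (fsum_ext K _ (fun i' => d i * (d i' * if Nat.eqb i' i then 1 else 0))).
    rewrite fsum_scal. rewrite fsum_delta by auto. reflexivity.
    intros i' Hi'. rewrite Horth by auto. destruct (Nat.eqb_spec i i'), (Nat.eqb_spec i' i); subst; try lia; ring.
Qed.
End Spectral.

Lemma spectral K A lam :
  second_largest_eig_mag K A lam -> 0 < lam < 1 ->
  (forall l k, (l < K)%nat -> (k < K)%nat -> A l k = A k l) ->
  (forall l, (l < K)%nat -> fsum K (fun k => A l k) = 1) ->
  forall y, fsum K y = 0 ->
  fsum K (fun k => fsum K (fun l => A l k * y l) * fsum K (fun l => A l k * y l))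
  <= lam * lam * fsum K (fun l => y l * y l).
Proof.
  intros (V & e & p & [Heig Horth] & Hp & Hmax & _ & Hlam) Hl Hsym Hrow y Hy.
  set (c := fun i => fsum K (fun l => y l * V i l)).
  assert (Hexp : forall l, (l < K)%nat -> y l = fsum K (fun i => c i * V i l)).
  { intros l Hl'. symmetry. apply complete_expand; auto. }
  assert (HAy : forall k, (k < K)%nat -> fsum K (fun l => A l k * y l) = fsum K (fun i => (c i * e i) * V i k)).
  { intros k Hk. transitivity (fsum K (fun l => A k l * fsum K (fun i => c i * V i l))).
    apply fsum_ext; intros l Hl'. rewrite Hsym, <- Hexp by auto. reflexivity.
    rewrite (fsum_ext K _ (fun l => fsum K (fun i => c i * (A k l * V i l)))).
    rewrite fsum_swap. apply fsum_ext; intros i Hi. rewrite fsum_scal, Heig by auto. ring.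
    intros l Hl'. rewrite <- fsum_scal. apply fsum_ext; intros; ring. }
  set (o := fun i => fsum K (fun l => V i l)).
  assert (Ho : forall i, (i < K)%nat -> i <> p -> o i = 0).
  { intros i Hi Hip. assert (He : e i * o i = o i).
    { unfold o. rewrite <- fsum_scal.
      transitivity (fsum K (fun l => fsum K (fun k => A l k * V i k))).
      apply fsum_ext; intros l Hl'. rewrite Heig by auto. reflexivity.
      rewrite fsum_swap. apply fsum_ext; intros k Hk.
      rewrite (fsum_ext K _ (fun l => V i k * A k l)). rewrite fsum_scal, Hrow by auto. ring.
      intros; rewrite Hsym by auto; ring. }
    assert (e i <> 1). { intro E. specialize (Hlam i Hi Hip). rewrite E, Rabs_R1 in Hlam. lra. }
    assert ((e i - 1) * o i = 0) by lra. apply Rmult_integral in H0. destruct H0; [lra|auto]. }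
  assert (Hcp : c p = 0).
  { assert (Hsum : fsum K y = fsum K (fun i => c i * o i)).
    { rewrite (fsum_ext K y (fun l => fsum K (fun i => c i * V i l))) by auto.
      rewrite fsum_swap. apply fsum_ext; intros. unfold o. rewrite fsum_scal. reflexivity. }
    rewrite (fsum_ext K (fun i => c i * o i) (fun i => if Nat.eqb i p then c p * o p else 0)) in Hsum.
    2:{ intros i Hi. destruct (Nat.eqb_spec i p). subst; reflexivity. rewrite Ho by auto; ring. }
    rewrite fsum_single, fsum_zero in Hsum by auto.
    assert (Hop : o p <> 0).
    { intro Hop. assert (H1 : (fun _ : nat => 1) p = fsum K (fun i => fsum K (fun l' => 1 * V i l') * V i p)).
      { symmetry. apply complete_expand; auto. }
      rewrite (fsum_ext K _ (fun i => 0)) in H1. rewrite fsum_zero in H1. lra.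
      intros i Hi. rewrite (fsum_ext K _ (fun l => V i l)) by (intros; ring).
      fold (o i). destruct (Nat.eq_dec i p). subst; rewrite Hop; ring. rewrite Ho by auto; ring. }
    assert (c p * o p = 0) by lra. apply Rmult_integral in H. destruct H; [auto|contradiction]. }
  rewrite (fsum_ext K _ (fun k => fsum K (fun i => (c i * e i) * V i k) * fsum K (fun i => (c i * e i) * V i k))).
  2:{ intros k Hk. rewrite HAy by auto. reflexivity. }
  rewrite parseval_gen by auto.
  rewrite (fsum_ext K (fun l => y l * y l) (fun k => fsum K (fun i => c i * V i k) * fsum K (fun i => c i * V i k))).
  2:{ intros k Hk. rewrite <- Hexp by auto. reflexivity. }
  rewrite parseval_gen by auto. rewrite <- fsum_scal. apply fsum_le. intros i Hi.
  destruct (Nat.eq_dec i p). subst. rewrite Hcp. nra.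
  specialize (Hlam i Hi n). pose proof (Rabs_pos (e i)).
  assert (e i * e i <= lam * lam).
  { assert (e i * e i = Rabs (e i) * Rabs (e i)) by (rewrite <- Rabs_mult; symmetry; apply Rabs_pos_eq, sqnn).
    nra. }
  pose proof (sqnn (c i)). nra.
Qed.

Lemma dpl_fsum n (F : nat -> R -> R) D x :
  (forall i, (i < n)%nat -> derivable_pt_lim (F i) x (D i)) ->
  derivable_pt_lim (fun t => fsum n (fun i => F i t)) x (fsum n D).
Proof. induction n; intros H; simpl.
  - apply derivable_pt_lim_const.
  - apply (derivable_pt_lim_plus (fun t => fsum n (fun i => F i t)) (F n)).
    apply IHn; intros; apply H; lia. apply H; lia. Qed.

Lemma dpl_scal c f x l : derivable_pt_lim f x l -> derivable_pt_lim (fun t => c * f t) x (c * l).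
Proof. intros H. apply (derivable_pt_lim_ext (mult_real_fct c f)). intros; reflexivity.
  apply derivable_pt_lim_scal; auto. Qed.

Lemma dpl_eq f x l1 l2 : derivable_pt_lim f x l1 -> l1 = l2 -> derivable_pt_lim f x l2.
Proof. intros H E; subst; exact H. Qed.

Lemma dpl_affine (Q dQ : R -> R -> R) g a b :
  (forall z, derivable_pt_lim (fun y => Q y g) z (dQ z g)) ->
  derivable_pt_lim (fun t => Q (a + t * b) g) 0 (dQ a g * b).
Proof. intros HQ.
  apply (derivable_pt_lim_ext (comp (fun y => Q y g) (fun t => a + t * b))). intros; reflexivity.
  apply derivable_pt_lim_comp.
  - apply (derivable_pt_lim_ext (fun t => a + t * b)). intros; reflexivity.
    apply dpl_eq with (0 + b * 1); [|ring].
    apply (derivable_pt_lim_ext (plus_fct (fun _ => a) (fun t => b * id t))). intros; unfold plus_fct, id; ring.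
    apply derivable_pt_lim_plus. apply derivable_pt_lim_const.
    apply dpl_scal. apply derivable_pt_lim_id.
  - replace (a + 0 * b) with a by ring. apply HQ.
Qed.

Lemma hTw_lin K M hn w d t : hTw K M hn (fun k j => w k j + t * d k j) = hTw K M hn w + t * hTw K M hn d.
Proof. unfold hTw, dotf, dotb. rewrite <- fsum_scal, <- fsum_add. apply fsum_ext; intros.
  rewrite <- fsum_scal, <- fsum_add. apply fsum_ext; intros. ring. Qed.

Lemma grad_zero (N K : nat) (M : nat -> nat) (h : nat -> bvec) (gam : nat -> R)
  (Q dQ : R -> R -> R) (r : nat -> vec -> R) (gr : nat -> vec -> vec) (wstar : bvec) :
  (0 < N)%nat ->
  (forall g z, derivable_pt_lim (fun y => Q y g) z (dQ z g)) ->
  (forall k, (k < K)%nat -> is_block_gradient (M k) (r k) (gr k)) ->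
  (forall w, Rrisk N K M h gam Q r wstar <= Rrisk N K M h gam Q r w) ->
  forall k j, (k < K)%nat -> (j < M k)%nat -> gradR N K M h gam dQ gr wstar k j = 0.
Proof.
  intros HN HQ Hgr Hmin.
  set (G := gradR N K M h gam dQ gr wstar).
  set (f := fun t => Rrisk N K M h gam Q r (fun k j => wstar k j + t * G k j)).
  assert (Hd : derivable_pt_lim f 0 (dotf K M G G)).
  { unfold f, Rrisk, rfull.
    set (DQ := fsum N (fun n => dQ (hTw K M (h n) wstar) (gam n) * hTw K M (h n) G)).
    set (DR := fsum K (fun k => dotb (M k) (gr k (wstar k)) (G k))).
    replace (dotf K M G G) with (/ INR N * DQ + DR).
    - apply (derivable_pt_lim_plus
        (fun t => / INR N * fsum N (fun n => Q (hTw K M (h n) (fun k j => wstar k j + t * G k j)) (gam n)))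
        (fun t => fsum K (fun k => r k (fun j => wstar k j + t * G k j)))).
      + apply dpl_scal. apply dpl_fsum. intros n Hn.
        apply (derivable_pt_lim_ext (fun t => Q (hTw K M (h n) wstar + t * hTw K M (h n) G) (gam n))).
        intros; rewrite hTw_lin; reflexivity. apply dpl_affine; auto.
      + apply (dpl_fsum K (fun k t => r k (fun j => wstar k j + t * G k j))). intros k Hk. apply Hgr; auto.
    - unfold DQ, DR, dotf, dotb. rewrite <- fsum_scal.
      transitivity (fsum K (fun k => fsum (M k) (fun j => (/ INR N * fsum N (fun n => dQ (hTw K M (h n) wstar) (gam n) * h n k j)) * G k j))
         + fsum K (fun k => fsum (M k) (fun j => gr k (wstar k) j * G k j))).
      + f_equal. unfold hTw, dotf, dotb.
        rewrite (fsum_ext N _ (fun n => fsum K (fun k => fsum (M k) (fun j => / INR N * dQ (hTw K M (h n) wstar) (gam n) * h n k j * G k j)))).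
        rewrite fsum_swap. apply fsum_ext; intros k Hk. rewrite fsum_swap. apply fsum_ext; intros j Hj.
        rewrite <- fsum_scal, <- fsum_scalr. apply fsum_ext; intros; unfold hTw, dotf, dotb; ring.
        intros n Hn. unfold hTw, dotf, dotb.
        set (c := dQ (fsum K (fun k => fsum (M k) (fun j => h n k j * wstar k j))) (gam n)).
        transitivity (/ INR N * c * fsum K (fun k => fsum (M k) (fun j => h n k j * G k j))). ring.
        rewrite <- fsum_scal. apply fsum_ext; intros k Hk. rewrite <- fsum_scal. apply fsum_ext; intros; ring.
      + rewrite <- fsum_add. apply fsum_ext; intros k Hk. rewrite <- fsum_add. apply fsum_ext; intros j Hj.
        unfold G, gradR. ring. }
  assert (Hpr : derivable_pt f 0) by (exists (dotf K M G G); exact Hd).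
  assert (H0 : derive_pt f 0 Hpr = 0).
  { apply (deriv_minimum f (-1) 1 0 Hpr); try lra. intros x _ _. unfold f.
    replace (fun k j => wstar k j + 0 * G k j) with wstar. apply Hmin.
    apply functional_extensionality; intros k; apply functional_extensionality; intros j; ring. }
  rewrite (derive_pt_eq_0 f 0 (dotf K M G G) Hpr Hd) in H0.
  intros k j Hk Hj.
  assert (Hk0 : dotb (M k) (G k) (G k) = 0).
  { apply (fsum_eq0 K (fun k => dotb (M k) (G k) (G k))); auto.
    intros; apply fsum_nonneg; intros; apply sqnn. }
  apply (fsum_eq0 (M k) (fun j => G k j * G k j)) with (p := j) in Hk0; auto.
  nra. intros; apply sqnn.
Qed.

Lemma expect_le N m F G : (0 < N)%nat -> (forall s, F s <= G s) -> expect N m F <= expect N m G.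
Proof. intros HN. revert F G. induction m; intros F G H; simpl; auto.
  apply Rmult_le_compat_l. left; apply Rinv_0_lt_compat, lt_0_INR; auto.
  apply fsum_le; intros. apply IHm; auto. Qed.

Lemma expect_scal N m c F : expect N m (fun s => c * F s) = c * expect N m F.
Proof. revert F. induction m; intros F; simpl; auto.
  rewrite (fsum_ext N _ (fun n => c * expect N m (fun s => F (upd s (S m) n)))).
  rewrite fsum_scal; ring. intros; apply IHm. Qed.

Lemma fsum_in n c (f : nat -> nat -> R) : fsum n (fun i => c * fsum n (f i)) = fsum n (fun i => fsum n (fun j => c * f i j)).
Proof. apply fsum_ext; intros. rewrite fsum_scal. reflexivity. Qed.

Lemma expect_swap N m (F : nat -> (nat -> nat) -> R) :
  expect N m (fun s => / INR N * fsum N (fun n => F n s)) = / INR N * fsum N (fun n => expect N m (F n)).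
Proof. revert F. induction m; intros F; simpl; auto.
  rewrite (fsum_ext N _ (fun n' => / INR N * fsum N (fun n => expect N m (fun s => F n (upd s (S m) n'))))).
  2:{ intros. apply (IHm (fun n s => F n (upd s (S m) _))). }
  f_equal. rewrite !fsum_in. apply fsum_swap. Qed.

Section Main.
Variables (N K : nat) (M : nat -> nat) (h : nat -> bvec) (gam : nat -> R)
  (dQ : R -> R -> R) (gr : nat -> vec -> vec) (A : nat -> nat -> R)
  (mu : R).

Definition step x n := vrd_step N K M A h gam dQ gr mu x n.
Definition zz x n k := fsum K (fun l => A l k * (st_u x n l + INR K * dotb (M l) (h n l) (st_w x l) - st_v x n l)).
Definition gg x n k j := (dQ (zz x n k) (gam n) - dQ (st_u x n k) (gam n)) * h n k j
         + / INR N * fsum N (fun n' => dQ (st_u x n' k) (gam n') * h n' k j)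
         + gr k (st_w x k) j.

Lemma step_w x n k j : st_w (step x n) k j = st_w x k j - mu * gg x n k j.
Proof. reflexivity. Qed.
Lemma step_u x n m k : st_u (step x n) m k = if Nat.eqb m n then zz x n k else st_u x m k.
Proof. reflexivity. Qed.
Lemma step_v x n m k : st_v (step x n) m k = if Nat.eqb m n then INR K * dotb (M k) (h n k) (st_w x k) else st_v x m k.
Proof. reflexivity. Qed.

Hypothesis Hrow : forall l, (l < K)%nat -> fsum K (fun k => A l k) = 1.

Definition inv x := forall n, (n < N)%nat -> fsum K (st_u x n) = fsum K (st_v x n).

Lemma sum_zz x n : fsum K (zz x n) = fsum K (fun l => st_u x n l + INR K * dotb (M l) (h n l) (st_w x l) - st_v x n l).
Proof. unfold zz. rewrite fsum_swap. apply fsum_ext; intros l Hl.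
  rewrite fsum_scalr, Hrow by auto. ring. Qed.

Definition hv x n := hTw K M (h n) (st_w x).

Lemma sum_hdot x n : fsum K (fun l => INR K * dotb (M l) (h n l) (st_w x l)) = INR K * hv x n.
Proof. rewrite fsum_scal. reflexivity. Qed.

Lemma sum_zz_inv x n : inv x -> (n < N)%nat -> fsum K (zz x n) = INR K * hv x n.
Proof. intros Hi Hn. rewrite sum_zz. rewrite fsum_sub, fsum_add, sum_hdot, Hi by auto. ring. Qed.

Lemma inv_step x n : inv x -> inv (step x n).
Proof. intros Hi m Hm.
  rewrite (fsum_ext K (st_u (step x n) m) (fun k => if Nat.eqb m n then zz x n k else st_u x m k)) by (intros; apply step_u).
  rewrite (fsum_ext K (st_v (step x n) m) (fun k => if Nat.eqb m n then INR K * dotb (M k) (h n k) (st_w x k) else st_v x m k)) by (intros; apply step_v).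
  destruct (Nat.eqb_spec m n).
  - subst. rewrite sum_zz_inv, sum_hdot by auto. reflexivity.
  - apply Hi; auto. Qed.

Lemma inv_init : inv vrd_init.
Proof. intros n Hn. reflexivity. Qed.


Hypothesis HK : (0 < K)%nat.
Hypothesis Hsym : forall l k, (l < K)%nat -> (k < K)%nat -> A l k = A k l.
Variable lam : R.
Hypothesis Hspec : forall y, fsum K y = 0 ->
  fsum K (fun k => fsum K (fun l => A l k * y l) * fsum K (fun l => A l k * y l))
  <= lam * lam * fsum K (fun l => y l * y l).

Lemma col_sum k : (k < K)%nat -> fsum K (fun l => A l k) = 1.
Proof. intros Hk. rewrite (fsum_ext K _ (fun l => A k l)). apply Hrow; auto. intros; apply Hsym; auto. Qed.

Definition ub x n := / INR K * fsum K (st_u x n).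
Definition cn x n := fsum K (fun k => (st_u x n k - ub x n) * (st_u x n k - ub x n)).
Definition pp x n k := INR K * dotb (M k) (h n k) (st_w x k) - st_v x n k.
Definition Pn x n := fsum K (fun k => pp x n k * pp x n k).
Definition Dn x n := fsum K (fun k => (zz x n k - hv x n) * (zz x n k - hv x n)).

Lemma INRK_pos : 0 < INR K.
Proof. apply lt_0_INR; auto. Qed.

Lemma fsum_young n a b e : 0 < e ->
  fsum n (fun i => (a i + b i) * (a i + b i)) <= (1 + e) * fsum n (fun i => a i * a i) + (1 + / e) * fsum n (fun i => b i * b i).
Proof. intros He. rewrite <- !fsum_scal, <- fsum_add. apply fsum_le; intros; apply young_sq; auto. Qed.

Lemma Dn_bound x n e : 0 < e -> inv x -> (n < N)%nat ->
  Dn x n <= lam * lam * ((1 + e) * cn x n + (1 + / e) * Pn x n).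
Proof. intros He Hi Hn.
  set (y := fun l => st_u x n l + pp x n l - hv x n).
  assert (Hsy : fsum K y = 0).
  { unfold y. rewrite fsum_sub, fsum_add, fsum_const. unfold pp. rewrite fsum_sub, sum_hdot, Hi by auto. ring. }
  assert (HD : Dn x n = fsum K (fun k => fsum K (fun l => A l k * y l) * fsum K (fun l => A l k * y l))).
  { unfold Dn. apply fsum_ext; intros k Hk.
    assert (E : zz x n k - hv x n = fsum K (fun l => A l k * y l)).
    { assert (E1: zz x n k = fsum K (fun l => A l k * (st_u x n l + pp x n l))) by (unfold zz, pp; apply fsum_ext; intros; ring).
      assert (E2: fsum K (fun l => A l k * y l) = fsum K (fun l => A l k * (st_u x n l + pp x n l)) - hv x n * fsum K (fun l => A l k))
        by (rewrite <- fsum_scal, <- fsum_sub; apply fsum_ext; intros; unfold y; ring).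
      rewrite E1, E2, col_sum by auto; ring. }
    rewrite E. reflexivity. }
  rewrite HD. eapply Rle_trans. apply Hspec; auto.
  apply Rmult_le_compat_l. apply sqnn.
  set (pb := / INR K * fsum K (pp x n)).
  assert (Hm : hv x n = ub x n + pb).
  { assert (Hp : fsum K (pp x n) = INR K * hv x n - fsum K (st_u x n)).
    { unfold pp. rewrite fsum_sub, sum_hdot, Hi by auto. reflexivity. }
    unfold ub, pb. rewrite Hp. field. apply Rgt_not_eq, INRK_pos. }
  rewrite (fsum_ext K (fun l => y l * y l) (fun l => ((st_u x n l - ub x n) + (pp x n l - pb)) * ((st_u x n l - ub x n) + (pp x n l - pb)))).
  2:{ intros l Hl. unfold y. rewrite Hm. ring. }
  eapply Rle_trans. apply (fsum_young K _ _ e He).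
  apply Rplus_le_compat. apply Rle_refl. apply Rmult_le_compat_l.
  assert (0 < / e) by (apply Rinv_0_lt_compat; auto). lra.
  unfold Pn, pb. apply fsum_centered; auto.
Qed.

Definition T2 x := fsum N (cn x).

Lemma cn_step x n m : inv x -> (n < N)%nat -> cn (step x n) m = if Nat.eqb m n then Dn x n else cn x m.
Proof. intros Hi Hn. unfold cn, ub.
  rewrite (fsum_ext K (st_u (step x n) m) (fun k => if Nat.eqb m n then zz x n k else st_u x m k)) by (intros; apply step_u).
  destruct (Nat.eqb_spec m n).
  - subst. rewrite sum_zz_inv by auto. unfold Dn.
    replace (/ INR K * (INR K * hv x n)) with (hv x n) by (field; apply Rgt_not_eq, INRK_pos).
    apply fsum_ext; intros k Hk. rewrite step_u, Nat.eqb_refl. reflexivity.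
  - assert (E : forall k, st_u (step x n) m k = st_u x m k).
    { intros k; rewrite step_u. destruct (Nat.eqb_spec m n); [lia|reflexivity]. }
    apply fsum_ext; intros k Hk. rewrite E. reflexivity. Qed.

Lemma T2_step x n : inv x -> (n < N)%nat -> T2 (step x n) = T2 x - cn x n + Dn x n.
Proof. intros Hi Hn. unfold T2.
  rewrite (fsum_ext N (cn (step x n)) (fun m => if Nat.eqb m n then Dn x n else cn x m)) by (intros; apply cn_step; auto).
  apply fsum_single; auto. Qed.

Variable wstar : bvec.
Definition ts n := hTw K M (h n) wstar.
Definition ew x := bsub (st_w x) wstar.
Definition T1 x := dotf K M (ew x) (ew x).
Definition T4n x n := fsum K (fun k => (st_u x n k - ts n) * (st_u x n k - ts n)).
Definition T4 x := fsum N (T4n x).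
Definition Zt x n := fsum K (fun k => (zz x n k - ts n) * (zz x n k - ts n)).

Lemma T4_step x n : (n < N)%nat -> T4 (step x n) = T4 x - T4n x n + Zt x n.
Proof. intros Hn. unfold T4.
  rewrite (fsum_ext N (T4n (step x n)) (fun m => if Nat.eqb m n then Zt x n else T4n x m)).
  apply fsum_single; auto.
  intros m Hm. unfold T4n, Zt. destruct (Nat.eqb_spec m n).
  - subst. apply fsum_ext; intros k Hk. rewrite step_u, Nat.eqb_refl. reflexivity.
  - apply fsum_ext; intros k Hk. rewrite step_u. destruct (Nat.eqb_spec m n); [lia|reflexivity]. Qed.

Definition Hs := 1 + fsum N (fun n => dotf K M (h n) (h n)).

Lemma dotb_nn m a : 0 <= dotb m a a.
Proof. apply fsum_nonneg; intros; apply sqnn. Qed.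
Lemma dotf_nn a : 0 <= dotf K M a a.
Proof. apply fsum_nonneg; intros; apply dotb_nn. Qed.

Lemma Hs_pos : 1 <= Hs.
Proof. unfold Hs. pose proof (fsum_nonneg N (fun n => dotf K M (h n) (h n)) (fun _ _ => dotf_nn _)). lra. Qed.

Lemma Hs_f n : (n < N)%nat -> dotf K M (h n) (h n) <= Hs.
Proof. intros Hn. unfold Hs. pose proof (fsum_term N (fun n => dotf K M (h n) (h n)) n Hn (fun _ _ => dotf_nn _)). lra. Qed.

Lemma dotb_le_dotf a k : (k < K)%nat -> dotb (M k) (a k) (a k) <= dotf K M a a.
Proof. intros Hk. apply (fsum_term K (fun k => dotb (M k) (a k) (a k))); auto. intros; apply dotb_nn. Qed.

Lemma Hs_b n k : (n < N)%nat -> (k < K)%nat -> dotb (M k) (h n k) (h n k) <= Hs.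
Proof. intros. eapply Rle_trans. apply dotb_le_dotf; auto. apply Hs_f; auto. Qed.

Lemma Hs_col k : (k < K)%nat -> fsum N (fun n => dotb (M k) (h n k) (h n k)) <= Hs.
Proof. intros Hk. unfold Hs. assert (fsum N (fun n => dotb (M k) (h n k) (h n k)) <= fsum N (fun n => dotf K M (h n) (h n))).
  apply fsum_le; intros; apply dotb_le_dotf; auto. lra. Qed.

Lemma hv_ts x n : hv x n - ts n = dotf K M (h n) (ew x).
Proof. unfold hv, ts, hTw, ew, bsub. rewrite !dotf_dsum, <- dsum_sub. apply dsum_ext; intros; ring. Qed.

Lemma hv_ts_sq x n : (n < N)%nat -> (hv x n - ts n) * (hv x n - ts n) <= Hs * T1 x.
Proof. intros Hn. rewrite hv_ts. eapply Rle_trans. apply dCS.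
  apply Rmult_le_compat_r. apply dotf_nn. apply Hs_f; auto. Qed.

Lemma Zt_bound x n : (n < N)%nat -> Zt x n <= 2 * Dn x n + 2 * INR K * (Hs * T1 x).
Proof. intros Hn. unfold Zt, Dn.
  rewrite (fsum_ext K _ (fun k => ((zz x n k - hv x n) + (hv x n - ts n)) * ((zz x n k - hv x n) + (hv x n - ts n)))) by (intros; ring).
  eapply Rle_trans. apply (fsum_young K _ _ 1 Rlt_0_1).
  cbv beta. rewrite fsum_const. rewrite Rinv_1. pose proof (hv_ts_sq x n Hn). pose proof (pos_INR K).
  assert (INR K * ((hv x n - ts n) * (hv x n - ts n)) <= INR K * (Hs * T1 x)) by (apply Rmult_le_compat_l; auto). lra. Qed.

Definition T3 x := fsum N (Pn x).
Definition GG x n := dotf K M (gg x n) (gg x n).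
Definition qq x n m k := mu * INR K * dotb (M k) (h m k) (gg x n k).
Definition Qm x n m := fsum K (fun k => qq x n m k * qq x n m k).

Lemma dotb_step x n m k : dotb (M k) (h m k) (st_w (step x n) k) = dotb (M k) (h m k) (st_w x k) - mu * dotb (M k) (h m k) (gg x n k).
Proof. unfold dotb. rewrite <- fsum_scal, <- fsum_sub. apply fsum_ext; intros. rewrite step_w. ring. Qed.

Lemma pp_step x n m k : pp (step x n) m k = if Nat.eqb m n then - qq x n m k else pp x m k - qq x n m k.
Proof. unfold pp, qq. rewrite dotb_step, step_v. destruct (Nat.eqb_spec m n); subst; ring. Qed.

Lemma Qm_nn x n m : 0 <= Qm x n m.
Proof. apply fsum_nonneg; intros; apply sqnn. Qed.

Lemma T3_step x n e : 0 < e -> (n < N)%nat ->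
  T3 (step x n) <= (1 + e) * (T3 x - Pn x n) + (1 + / e) * fsum N (Qm x n).
Proof. intros He Hn. unfold T3.
  assert (Hie : 0 < / e) by (apply Rinv_0_lt_compat; auto).
  apply Rle_trans with (fsum N (fun m => if Nat.eqb m n then Qm x n n else (1 + e) * Pn x m + (1 + / e) * Qm x n m)).
  - apply fsum_le; intros m Hm. unfold Pn at 1. destruct (Nat.eqb_spec m n).
    + subst. unfold Qm. apply Req_le. apply fsum_ext; intros k Hk. rewrite pp_step, Nat.eqb_refl. ring.
    + rewrite (fsum_ext K _ (fun k => (pp x m k + - qq x n m k) * (pp x m k + - qq x n m k))).
      2:{ intros k Hk. rewrite pp_step. destruct (Nat.eqb_spec m n); [lia|ring]. }
      eapply Rle_trans. apply (fsum_young K _ _ e He). cbv beta. unfold Pn, Qm.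
      rewrite (fsum_ext K (fun i => - qq x n m i * - qq x n m i) (fun k => qq x n m k * qq x n m k)) by (intros; ring).
      lra.
  - rewrite fsum_single by auto. rewrite fsum_add, !fsum_scal.
    pose proof (Qm_nn x n n). assert (Qm x n n <= (1 + / e) * Qm x n n) by nra. lra.
Qed.

Lemma sumQ_bound x n : fsum N (Qm x n) <= mu * mu * (INR K * INR K) * Hs * GG x n.
Proof. unfold Qm, qq, GG, dotf.
  rewrite (fsum_ext N _ (fun m => (mu * mu * (INR K * INR K)) * fsum K (fun k => dotb (M k) (h m k) (gg x n k) * dotb (M k) (h m k) (gg x n k)))).
  2:{ intros m Hm. rewrite <- fsum_scal. apply fsum_ext; intros; ring. }
  rewrite fsum_scal.
  apply Rle_trans with ((mu * mu * (INR K * INR K)) * (Hs * fsum K (fun k => dotb (M k) (gg x n k) (gg x n k)))); [|right; ring].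
  apply Rmult_le_compat_l.
  assert (0 <= mu * mu) by apply sqnn. pose proof (pos_INR K). apply Rmult_le_pos; auto. apply Rmult_le_pos; auto.
  rewrite fsum_swap. rewrite <- fsum_scal. apply fsum_le; intros k Hk.
  apply Rle_trans with (fsum N (fun m => dotb (M k) (h m k) (h m k) * dotb (M k) (gg x n k) (gg x n k))).
  apply fsum_le; intros m Hm. apply CS.
  rewrite fsum_scalr. apply Rmult_le_compat_r. apply dotb_nn. apply Hs_col; auto.
Qed.

Lemma T1_step x n : T1 (step x n) = T1 x - 2 * mu * dotf K M (ew x) (gg x n) + mu * mu * GG x n.
Proof. unfold T1, GG. rewrite !dotf_dsum.
  rewrite (dsum_ext K M _ (fun k j => (ew x k j * ew x k j - 2 * mu * (ew x k j * gg x n k j)) + mu * mu * (gg x n k j * gg x n k j))).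
  rewrite dsum_add, dsum_sub, !dsum_scal. ring.
  intros k j _ _. unfold ew, bsub. rewrite step_w. ring. Qed.

Variables (delta eta nu : R).
Hypothesis HN : (0 < N)%nat.
Hypothesis HdQ : forall n z1 z2, (n < N)%nat ->
     Rabs (dQ z1 (gam n) - dQ z2 (gam n)) <= delta * Rabs (z1 - z2).
Hypothesis Hgrl : forall w1 w2,
     normf K M (fun k j => gr k (w1 k) j - gr k (w2 k) j) <= eta * normf K M (bsub w1 w2).
Hypothesis Hsc : forall w1 w2,
     dotf K M (bsub (gradR N K M h gam dQ gr w1) (gradR N K M h gam dQ gr w2)) (bsub w1 w2)
     >= nu * dotf K M (bsub w1 w2) (bsub w1 w2).
Hypothesis Hgz : forall k j, (k < K)%nat -> (j < M k)%nat -> gradR N K M h gam dQ gr wstar k j = 0.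

Lemma INRN_pos : 0 < INR N.
Proof. apply lt_0_INR; auto. Qed.

Lemma dQ_sq n z1 z2 : (n < N)%nat ->
  (dQ z1 (gam n) - dQ z2 (gam n)) * (dQ z1 (gam n) - dQ z2 (gam n)) <= delta * delta * ((z1 - z2) * (z1 - z2)).
Proof. intros Hn. pose proof (HdQ n z1 z2 Hn). pose proof (Rabs_pos (dQ z1 (gam n) - dQ z2 (gam n))).
  assert (E1 : forall a, a * a = Rabs a * Rabs a) by (intros; rewrite <- Rabs_mult; symmetry; apply Rabs_pos_eq, sqnn).
  rewrite (E1 (dQ z1 (gam n) - dQ z2 (gam n))), (E1 (z1 - z2)).
  assert (0 <= delta * Rabs (z1 - z2)) by lra.
  replace (delta * delta * (Rabs (z1 - z2) * Rabs (z1 - z2))) with ((delta * Rabs (z1 - z2)) * (delta * Rabs (z1 - z2))) by ring.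
  apply Rmult_le_compat; auto. Qed.

Lemma jensen_avg n a : (0 < n)%nat -> (/ INR n * fsum n a) * (/ INR n * fsum n a) <= / INR n * fsum n (fun i => a i * a i).
Proof. intros Hn. pose proof (jensen n a). assert (0 < INR n) by (apply lt_0_INR; auto).
  replace ((/ INR n * fsum n a) * (/ INR n * fsum n a)) with (/ INR n * / INR n * (fsum n a * fsum n a)) by ring.
  apply Rle_trans with (/ INR n * / INR n * (INR n * fsum n (fun i => a i * a i))).
  apply Rmult_le_compat_l; auto. assert (0 < / INR n) by (apply Rinv_0_lt_compat; auto). nra.
  right; field; lra. Qed.

Lemma dsum_scalh n f : dsum K M (fun k j => (f k * h n k j) * (f k * h n k j)) = fsum K (fun k => f k * f k * dotb (M k) (h n k) (h n k)).
Proof. unfold dsum. apply fsum_ext; intros. unfold dotb. rewrite <- fsum_scal. apply fsum_ext; intros; ring. Qed.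

Lemma dsum_scalh_le n f g : (n < N)%nat -> (forall k, (k < K)%nat -> f k * f k <= g k) ->
  dsum K M (fun k j => (f k * h n k j) * (f k * h n k j)) <= Hs * fsum K g.
Proof. intros Hn H. rewrite dsum_scalh. rewrite <- fsum_scal. apply fsum_le; intros k Hk.
  pose proof (Hs_b n k Hn Hk). pose proof (dotb_nn (M k) (h n k)). pose proof (H k Hk). pose proof (sqnn (f k)).
  rewrite Rmult_comm. apply Rmult_le_compat; auto. Qed.

Lemma dsum_fsum_swap n (F : nat -> nat -> nat -> R) :
  dsum K M (fun k j => fsum n (fun i => F i k j)) = fsum n (fun i => dsum K M (fun k j => F i k j)).
Proof. unfold dsum. rewrite fsum_swap. apply fsum_ext; intros. apply fsum_swap. Qed.
Definition bias x k j := / INR N * fsum N (fun n => (dQ (zz x n k) (gam n) - dQ (hv x n) (gam n)) * h n k j).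

Lemma avg_gg x k j : / INR N * fsum N (fun n => gg x n k j) = gradR N K M h gam dQ gr (st_w x) k j + bias x k j.
Proof. unfold gg, gradR, bias, hv. rewrite !fsum_add, !fsum_const.
  set (S2 := fsum N (fun n' => dQ (st_u x n' k) (gam n') * h n' k j)).
  set (S3 := fsum N (fun n => dQ (zz x n k) (gam n) * h n k j)).
  set (S4 := fsum N (fun n => dQ (hTw K M (h n) (st_w x)) (gam n) * h n k j)).
  assert (E1 : fsum N (fun n => (dQ (zz x n k) (gam n) - dQ (st_u x n k) (gam n)) * h n k j) = S3 - S2).
  { unfold S2, S3. rewrite <- fsum_sub. apply fsum_ext; intros; ring. }
  assert (E2 : fsum N (fun n => (dQ (zz x n k) (gam n) - dQ (hTw K M (h n) (st_w x)) (gam n)) * h n k j) = S3 - S4).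
  { unfold S4, S3. rewrite <- fsum_sub. apply fsum_ext; intros; ring. }
  rewrite E1, E2. field. apply Rgt_not_eq, INRN_pos. Qed.

Lemma avg_dot x : / INR N * fsum N (fun n => dotf K M (ew x) (gg x n)) =
  dotf K M (ew x) (gradR N K M h gam dQ gr (st_w x)) + dotf K M (ew x) (bias x).
Proof. rewrite !dotf_dsum, <- dsum_add.
  rewrite (dsum_ext K M _ (fun k j => ew x k j * (/ INR N * fsum N (fun n => gg x n k j)))).
  2:{ intros. rewrite avg_gg. ring. }
  unfold dotf, dotb, dsum.
  transitivity (fsum N (fun n => fsum K (fun k => fsum (M k) (fun j => / INR N * (ew x k j * gg x n k j))))).
  { rewrite <- fsum_scal. apply fsum_ext; intros. rewrite <- fsum_scal. apply fsum_ext; intros. rewrite <- fsum_scal. reflexivity. }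
  rewrite fsum_swap. apply fsum_ext; intros k Hk. rewrite fsum_swap. apply fsum_ext; intros j Hj.
  rewrite <- fsum_scal, <- fsum_scal. apply fsum_ext; intros; ring. Qed.

Lemma sc_use x : nu * T1 x <= dotf K M (ew x) (gradR N K M h gam dQ gr (st_w x)).
Proof. pose proof (Hsc (st_w x) wstar). unfold T1, ew. 
  replace (dotf K M (bsub (st_w x) wstar) (gradR N K M h gam dQ gr (st_w x))) with
    (dotf K M (bsub (gradR N K M h gam dQ gr (st_w x)) (gradR N K M h gam dQ gr wstar)) (bsub (st_w x) wstar)). lra.
  rewrite !dotf_dsum. apply dsum_ext; intros k j Hk Hj. unfold bsub. rewrite Hgz by auto. ring. Qed.

Lemma bias_bound x : dotf K M (bias x) (bias x) <= delta * delta * Hs * (/ INR N * fsum N (Dn x)).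
Proof. rewrite dotf_dsum.
  apply Rle_trans with (dsum K M (fun k j => / INR N * fsum N (fun n => ((dQ (zz x n k) (gam n) - dQ (hv x n) (gam n)) * h n k j) * ((dQ (zz x n k) (gam n) - dQ (hv x n) (gam n)) * h n k j)))).
  { apply dsum_le; intros k j Hk Hj. unfold bias. apply jensen_avg; auto. }
  rewrite dsum_scal, dsum_fsum_swap.
  replace (delta * delta * Hs * (/ INR N * fsum N (Dn x))) with (/ INR N * fsum N (fun n => Hs * fsum K (fun k => delta * delta * ((zz x n k - hv x n) * (zz x n k - hv x n))))).
  2:{ transitivity (/ INR N * fsum N (fun n => delta * delta * Hs * Dn x n)).
       f_equal. apply fsum_ext; intros. unfold Dn. rewrite <- !fsum_scal. apply fsum_ext; intros; ring.
       rewrite fsum_scal; ring. }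
  apply Rmult_le_compat_l. left; apply Rinv_0_lt_compat, INRN_pos.
  apply fsum_le; intros n Hn. apply dsum_scalh_le; auto. intros; apply dQ_sq; auto.
Qed.

Lemma sqrt_sq_le a b c : 0 <= a -> 0 <= b -> sqrt a <= c * sqrt b -> a <= c * c * b.
Proof. intros Ha Hb H. pose proof (sqrt_pos a). pose proof (sqrt_pos b).
  rewrite <- (sqrt_sqrt a Ha), <- (sqrt_sqrt b Hb).
  replace (c * c * (sqrt b * sqrt b)) with ((c * sqrt b) * (c * sqrt b)) by ring.
  apply Rmult_le_compat; lra. Qed.

Lemma four_sq a b c d : (a - b + c + d) * (a - b + c + d) <= 4 * (a * a + b * b + c * c + d * d).
Proof. pose proof (sqnn (a+b)). pose proof (sqnn (a-c)). pose proof (sqnn (a-d)).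
  pose proof (sqnn (b+c)). pose proof (sqnn (b+d)). pose proof (sqnn (c-d)).
  assert (E : 4 * (a * a + b * b + c * c + d * d) - (a - b + c + d) * (a - b + c + d) =
    (a+b)*(a+b) + (a-c)*(a-c) + (a-d)*(a-d) + (b+c)*(b+c) + (b+d)*(b+d) + (c-d)*(c-d)) by ring.
  lra. Qed.

Lemma GG_bound x n : (n < N)%nat ->
  GG x n <= 4 * (delta * delta * Hs * Zt x n + delta * delta * Hs * T4n x n
                 + delta * delta * Hs * (/ INR N * T4 x) + eta * eta * T1 x).
Proof. intros Hn.
  set (a1 := fun k j => (dQ (zz x n k) (gam n) - dQ (ts n) (gam n)) * h n k j).
  set (a2 := fun k j => (dQ (st_u x n k) (gam n) - dQ (ts n) (gam n)) * h n k j).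
  set (a3 := fun k j => / INR N * fsum N (fun m => (dQ (st_u x m k) (gam m) - dQ (ts m) (gam m)) * h m k j)).
  set (a4 := fun k j => gr k (st_w x k) j - gr k (wstar k) j).
  assert (Hdec : forall k j, (k < K)%nat -> (j < M k)%nat -> gg x n k j = a1 k j - a2 k j + a3 k j + a4 k j).
  { intros k j Hk Hj. pose proof (Hgz k j Hk Hj) as Z. unfold gradR in Z.
    unfold gg, a1, a2, a3, a4, ts.
    rewrite (fsum_ext N (fun m => (dQ (st_u x m k) (gam m) - dQ (hTw K M (h m) wstar) (gam m)) * h m k j)
      (fun m => dQ (st_u x m k) (gam m) * h m k j - dQ (hTw K M (h m) wstar) (gam m) * h m k j)) by (intros; ring).
    rewrite fsum_sub. lra. }
  unfold GG. rewrite dotf_dsum.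
  rewrite (dsum_ext K M _ (fun k j => (a1 k j - a2 k j + a3 k j + a4 k j) * (a1 k j - a2 k j + a3 k j + a4 k j))).
  2:{ intros k j Hk Hj. rewrite Hdec by auto. reflexivity. }
  eapply Rle_trans. apply dsum_le. intros k j _ _. apply four_sq.
  rewrite dsum_scal, !dsum_add. apply Rmult_le_compat_l. lra.
  assert (H1 : dsum K M (fun k j => a1 k j * a1 k j) <= delta * delta * Hs * Zt x n).
  { unfold a1. eapply Rle_trans. apply (dsum_scalh_le n _ (fun k => delta * delta * ((zz x n k - ts n) * (zz x n k - ts n)))); auto.
    intros; apply dQ_sq; auto. unfold Zt. rewrite fsum_scal. right; ring. }
  assert (H2 : dsum K M (fun k j => a2 k j * a2 k j) <= delta * delta * Hs * T4n x n).
  { unfold a2. eapply Rle_trans. apply (dsum_scalh_le n _ (fun k => delta * delta * ((st_u x n k - ts n) * (st_u x n k - ts n)))); auto.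
    intros; apply dQ_sq; auto. unfold T4n. rewrite fsum_scal. right; ring. }
  assert (H3 : dsum K M (fun k j => a3 k j * a3 k j) <= delta * delta * Hs * (/ INR N * T4 x)).
  { apply Rle_trans with (dsum K M (fun k j => / INR N * fsum N (fun m => ((dQ (st_u x m k) (gam m) - dQ (ts m) (gam m)) * h m k j) * ((dQ (st_u x m k) (gam m) - dQ (ts m) (gam m)) * h m k j)))).
    { apply dsum_le; intros. unfold a3. apply jensen_avg; auto. }
    rewrite dsum_scal, dsum_fsum_swap.
    replace (delta * delta * Hs * (/ INR N * T4 x)) with (/ INR N * fsum N (fun m => Hs * fsum K (fun k => delta * delta * ((st_u x m k - ts m) * (st_u x m k - ts m))))).
    2:{ unfold T4, T4n. transitivity (/ INR N * fsum N (fun m => delta * delta * Hs * fsum K (fun k => (st_u x m k - ts m) * (st_u x m k - ts m)))).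
        f_equal. apply fsum_ext; intros. rewrite <- !fsum_scal. apply fsum_ext; intros; ring.
        rewrite fsum_scal; ring. }
    apply Rmult_le_compat_l. left; apply Rinv_0_lt_compat, INRN_pos.
    apply fsum_le; intros m Hm. apply dsum_scalh_le; auto. intros; apply dQ_sq; auto. }
  assert (H4 : dsum K M (fun k j => a4 k j * a4 k j) <= eta * eta * T1 x).
  { apply sqrt_sq_le. apply dsum_nonneg; intros; apply sqnn. apply dotf_nn. apply Hgrl. }
  lra.
Qed.

Hypothesis Hlam : 0 < lam < 1.
Hypothesis Hmu : 0 < mu.
Hypothesis Hnu : 0 < nu.

Definition avg F := / INR N * fsum N F.

Lemma avg_le F G : (forall n, (n < N)%nat -> F n <= G n) -> avg F <= avg G.
Proof. intros H. unfold avg. apply Rmult_le_compat_l. left; apply Rinv_0_lt_compat, INRN_pos. apply fsum_le; auto. Qed.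
Lemma avg_add F G : avg (fun n => F n + G n) = avg F + avg G.
Proof. unfold avg. rewrite fsum_add. ring. Qed.
Lemma avg_sub F G : avg (fun n => F n - G n) = avg F - avg G.
Proof. unfold avg. rewrite fsum_sub. ring. Qed.
Lemma avg_scal c F : avg (fun n => c * F n) = c * avg F.
Proof. unfold avg. rewrite fsum_scal. ring. Qed.
Lemma avg_const c : avg (fun _ => c) = c.
Proof. unfold avg. rewrite fsum_const. field. apply Rgt_not_eq, INRN_pos. Qed.
Lemma avg_nn F : (forall n, (n < N)%nat -> 0 <= F n) -> 0 <= avg F.
Proof. intros H. unfold avg. apply Rmult_le_pos. left; apply Rinv_0_lt_compat, INRN_pos. apply fsum_nonneg; auto. Qed.

Lemma cn_nn x n : 0 <= cn x n.
Proof. apply fsum_nonneg; intros; apply sqnn. Qed.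
Lemma Pn_nn x n : 0 <= Pn x n.
Proof. apply fsum_nonneg; intros; apply sqnn. Qed.
Lemma Dn_nn x n : 0 <= Dn x n.
Proof. apply fsum_nonneg; intros; apply sqnn. Qed.
Lemma T1_nn x : 0 <= T1 x.
Proof. apply dotf_nn. Qed.
Lemma T2_nn x : 0 <= T2 x.
Proof. apply fsum_nonneg; intros; apply cn_nn. Qed.
Lemma T3_nn x : 0 <= T3 x.
Proof. apply fsum_nonneg; intros; apply Pn_nn. Qed.
Lemma T4_nn x : 0 <= T4 x.
Proof. apply fsum_nonneg; intros; apply fsum_nonneg; intros; apply sqnn. Qed.
Lemma GG_nn x n : 0 <= GG x n.
Proof. apply dotf_nn. Qed.

Definition Bl := / (1 - lam).

Lemma Dn_sharp x n : inv x -> (n < N)%nat -> Dn x n <= lam * cn x n + lam * lam * Bl * Pn x n.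
Proof. intros Hi Hn. eapply Rle_trans. apply (Dn_bound x n ((1 - lam) / lam)); auto.
  apply Rdiv_lt_0_compat; lra. right. unfold Bl. field. lra. Qed.

Lemma Bl_ge1 : 1 <= Bl.
Proof. unfold Bl. rewrite <- Rinv_1. apply Rinv_le_contravar; lra. Qed.

Lemma Dn_crude x n : inv x -> (n < N)%nat -> Dn x n <= cn x n + Bl * Pn x n.
Proof. intros Hi Hn. eapply Rle_trans. apply Dn_sharp; auto.
  pose proof (cn_nn x n). pose proof (Pn_nn x n). pose proof Bl_ge1.
  assert (lam * cn x n <= cn x n) by nra. assert (lam * lam * Bl * Pn x n <= Bl * Pn x n).
  { assert (lam * lam <= 1) by nra. assert (0 <= Bl * Pn x n) by nra. nra. } lra. Qed.

Definition Yv x := avg (Dn x).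
Definition Xv x := avg (GG x).

Lemma avg_cn x : avg (cn x) = / INR N * T2 x.
Proof. reflexivity. Qed.
Lemma avg_Pn x : avg (Pn x) = / INR N * T3 x.
Proof. reflexivity. Qed.
Lemma avg_T4n x : avg (T4n x) = / INR N * T4 x.
Proof. reflexivity. Qed.

Lemma EY x : inv x -> Yv x <= / INR N * (T2 x + Bl * T3 x).
Proof. intros Hi. unfold Yv. eapply Rle_trans. apply avg_le. intros; apply Dn_crude; auto.
  rewrite avg_add, avg_scal, avg_cn, avg_Pn. right; ring. Qed.

Lemma neg2ab a b : -2 * (a * b) <= nu * (a * a) + / nu * (b * b).
Proof. assert (0 <= (nu * a + b) * (nu * a + b) / nu) by (apply Rmult_le_pos; [apply sqnn | left; apply Rinv_0_lt_compat; lra]).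
  replace (nu * (a * a) + / nu * (b * b)) with ((nu * a + b) * (nu * a + b) / nu - 2 * (a * b)) by (field; lra). lra. Qed.

Lemma avg_ext F G : (forall n, (n < N)%nat -> F n = G n) -> avg F = avg G.
Proof. intros H. unfold avg. f_equal. apply fsum_ext; auto. Qed.

Lemma negdot x : -2 * dotf K M (ew x) (bias x) <= nu * T1 x + / nu * dotf K M (bias x) (bias x).
Proof. unfold T1. rewrite !dotf_dsum. rewrite <- dsum_scal, <- dsum_scal, <- dsum_scal, <- dsum_add.
  apply dsum_le; intros. apply neg2ab. Qed.

Lemma E1 x : avg (fun n => T1 (step x n)) <= (1 - mu * nu) * T1 x + mu * (delta * delta * Hs / nu) * Yv x + mu * mu * Xv x.
Proof.
  rewrite (avg_ext _ (fun n => (T1 x - 2 * mu * dotf K M (ew x) (gg x n)) + mu * mu * GG x n)) by (intros; apply T1_step).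
  rewrite avg_add, avg_sub, avg_const, avg_scal, avg_scal.
  replace (avg (fun n => dotf K M (ew x) (gg x n))) with (/ INR N * fsum N (fun n => dotf K M (ew x) (gg x n))) by reflexivity.
  rewrite avg_dot. pose proof (sc_use x). pose proof (negdot x). pose proof (bias_bound x).
  fold (Xv x). unfold Yv. replace (avg (Dn x)) with (/ INR N * fsum N (Dn x)) by reflexivity.
  assert (/ nu * dotf K M (bias x) (bias x) <= delta * delta * Hs / nu * (/ INR N * fsum N (Dn x))).
  { unfold Rdiv. replace (delta * delta * Hs * / nu * (/ INR N * fsum N (Dn x))) with (/ nu * (delta * delta * Hs * (/ INR N * fsum N (Dn x)))) by ring.
    apply Rmult_le_compat_l; auto. left; apply Rinv_0_lt_compat; lra. }
  nra.
Qed.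

Lemma E2 x : inv x -> avg (fun n => T2 (step x n)) <= (1 - (1 - lam) / INR N) * T2 x + lam * lam * Bl / INR N * T3 x.
Proof. intros Hi.
  rewrite (avg_ext _ (fun n => T2 x - cn x n + Dn x n)) by (intros; apply T2_step; auto).
  apply Rle_trans with (avg (fun n => T2 x - (1 - lam) * cn x n + lam * lam * Bl * Pn x n)).
  { apply avg_le; intros n Hn. pose proof (Dn_sharp x n Hi Hn). lra. }
  rewrite avg_add, avg_sub, avg_const, avg_scal, avg_scal, avg_cn, avg_Pn. right. field. apply Rgt_not_eq, INRN_pos. Qed.

Lemma E3 x : avg (fun n => T3 (step x n)) <= (1 + / (2 * INR N)) * (1 - / INR N) * T3 x + (1 + 2 * INR N) * (mu * mu * (INR K * INR K) * Hs) * Xv x.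
Proof. pose proof INRN_pos.
  assert (He : 0 < / (2 * INR N)) by (apply Rinv_0_lt_compat; lra).
  apply Rle_trans with (avg (fun n => (1 + / (2 * INR N)) * (T3 x - Pn x n) + (1 + / / (2 * INR N)) * (mu * mu * (INR K * INR K) * Hs * GG x n))).
  { apply avg_le; intros n Hn. eapply Rle_trans. apply (T3_step x n (/ (2 * INR N)) He Hn).
    apply Rplus_le_compat_l. apply Rmult_le_compat_l. pose proof (Rinv_0_lt_compat _ He); lra. apply sumQ_bound. }
  rewrite avg_add, avg_scal, avg_sub, avg_const, avg_scal, avg_scal, avg_Pn. unfold Xv. rewrite Rinv_inv. right; ring. Qed.

Lemma EZ x : inv x -> avg (Zt x) <= 2 * Yv x + 2 * INR K * Hs * T1 x.
Proof. intros Hi. apply Rle_trans with (avg (fun n => 2 * Dn x n + 2 * INR K * (Hs * T1 x))).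
  apply avg_le; intros; apply Zt_bound; auto.
  rewrite avg_add, avg_scal, avg_const. unfold Yv. right; ring. Qed.

Lemma E4 x : inv x -> avg (fun n => T4 (step x n)) <= (1 - / INR N) * T4 x + 2 * Yv x + 2 * INR K * Hs * T1 x.
Proof. intros Hi. rewrite (avg_ext _ (fun n => T4 x - T4n x n + Zt x n)) by (intros; apply T4_step; auto).
  rewrite avg_add, avg_sub, avg_const, avg_T4n. pose proof (EZ x Hi). lra. Qed.

Definition cX := 8 * (delta * delta) * Hs * (1 + INR K * Hs) + 4 * (eta * eta).

Lemma EX x : inv x -> Xv x <= cX * (Yv x + T1 x + / INR N * T4 x).
Proof. intros Hi. unfold Xv.
  apply Rle_trans with (avg (fun n => 4 * (delta * delta * Hs * Zt x n + delta * delta * Hs * T4n x n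
                 + delta * delta * Hs * (/ INR N * T4 x) + eta * eta * T1 x))).
  apply avg_le; intros; apply GG_bound; auto.
  rewrite avg_scal, !avg_add, !avg_scal, !avg_const, avg_T4n.
  pose proof (EZ x Hi). pose proof (T1_nn x). pose proof (T4_nn x). pose proof Hs_pos.
  assert (HY : 0 <= Yv x) by (apply avg_nn; intros; apply Dn_nn).
  assert (0 <= / INR N * T4 x) by (apply Rmult_le_pos; [left; apply Rinv_0_lt_compat, INRN_pos|auto]).
  pose proof (pos_INR K). pose proof (sqnn delta). pose proof (sqnn eta).
  assert (0 <= delta * delta * Hs) by nra.
  assert (delta * delta * Hs * avg (Zt x) <= delta * delta * Hs * (2 * Yv x + 2 * INR K * Hs * T1 x)) by (apply Rmult_le_compat_l; auto).
  unfold cX.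
  assert (0 <= delta * delta * Hs * INR K * Hs) by (apply Rmult_le_pos; [nra|lra]).
  nra.
Qed.

Definition b4 := nu / (8 * INR K * Hs).
Definition cA := delta * delta * Hs / nu + 2 * b4 + 1.
Definition b2 := 2 * cA / (1 - lam).
Definition b3 := 2 * (b2 * (lam * lam * Bl) + Bl * cA) / lam.
Definition Wc := 1 + b3 * (1 + 2 * INR N) * (INR K * INR K) * Hs.
Definition Vf x := T1 x + mu * (b2 * T2 x + b3 * T3 x + b4 * T4 x).
Definition rho := Rmax (1 - (1 - lam) / (2 * INR N)) (1 - mu * nu / 4).

Lemma b4_pos : 0 < b4.
Proof. unfold b4. pose proof Hs_pos. assert (0 < INR K) by apply INRK_pos. apply Rdiv_lt_0_compat; auto. nra. Qed.
Lemma cA_pos : 1 <= cA.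
Proof. unfold cA. pose proof b4_pos. pose proof Hs_pos. pose proof (sqnn delta).
  assert (0 <= delta * delta * Hs / nu). { apply Rmult_le_pos. nra. left; apply Rinv_0_lt_compat; lra. } lra. Qed.
Lemma b2_pos : 0 < b2.
Proof. unfold b2. pose proof cA_pos. apply Rdiv_lt_0_compat; lra. Qed.
Lemma b3_pos : 0 < b3.
Proof. unfold b3. pose proof cA_pos. pose proof b2_pos. pose proof Bl_ge1.
  apply Rdiv_lt_0_compat; [|lra]. assert (0 <= b2 * (lam * lam * Bl)). { apply Rmult_le_pos; [lra|]. apply Rmult_le_pos; nra. } nra. Qed.
Lemma Wc_ge1 : 1 <= Wc.
Proof. unfold Wc. pose proof b3_pos. pose proof Hs_pos. pose proof (pos_INR N). pose proof (pos_INR K).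
  assert (0 <= b3 * (1 + 2 * INR N) * (INR K * INR K) * Hs). { apply Rmult_le_pos; [|lra]. apply Rmult_le_pos; [|nra]. nra. } lra. Qed.
Lemma cX_nn : 0 <= cX.
Proof. unfold cX. pose proof Hs_pos. pose proof (pos_INR K). pose proof (sqnn delta). pose proof (sqnn eta).
  assert (0 <= INR K * Hs) by nra. assert (0 <= delta * delta * Hs) by nra. nra. Qed.
Lemma rho_ge1 : 1 - (1 - lam) / (2 * INR N) <= rho.
Proof. apply Rmax_l. Qed.
Lemma rho_ge2 : 1 - mu * nu / 4 <= rho.
Proof. apply Rmax_r. Qed.

Lemma lin4 c1 c2 c3 c4 d1 d2 d3 d4 t1 t2 t3 t4 : c1 <= d1 -> c2 <= d2 -> c3 <= d3 -> c4 <= d4 ->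
  0 <= t1 -> 0 <= t2 -> 0 <= t3 -> 0 <= t4 -> c1 * t1 + c2 * t2 + c3 * t3 + c4 * t4 <= d1 * t1 + d2 * t2 + d3 * t3 + d4 * t4.
Proof. intros. pose proof (Rmult_le_compat_r t1 c1 d1). pose proof (Rmult_le_compat_r t2 c2 d2).
  pose proof (Rmult_le_compat_r t3 c3 d3). pose proof (Rmult_le_compat_r t4 c4 d4). lra. Qed.

Hypothesis Hmu1 : mu <= 1.
Hypothesis Hq1 : mu * Wc * cX <= nu / 2.
Hypothesis Hq2 : mu * Wc * cX <= b4 / 2.
Hypothesis Hq3 : mu * Wc * cX <= 1.

Lemma lyap x : inv x -> avg (fun n => Vf (step x n)) <= rho * Vf x.
Proof. intros Hi.
  pose proof INRN_pos as HNp.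
  set (t1 := T1 x). set (t2 := T2 x). set (t3 := T3 x). set (t4 := T4 x). set (X := Xv x). set (Y := Yv x).
  assert (Ht1 : 0 <= t1) by apply T1_nn. assert (Ht2 : 0 <= t2) by apply T2_nn.
  assert (Ht3 : 0 <= t3) by apply T3_nn. assert (Ht4 : 0 <= t4) by apply T4_nn.
  assert (HX : 0 <= X) by (apply avg_nn; intros; apply GG_nn).
  assert (HY : 0 <= Y) by (apply avg_nn; intros; apply Dn_nn).
  pose proof (E1 x) as H1. pose proof (E2 x Hi) as H2. pose proof (E3 x) as H3. pose proof (E4 x Hi) as H4.
  pose proof (EX x Hi) as HEX. pose proof (EY x Hi) as HEY.
  fold t1 t2 t3 t4 X Y in H1, H2, H3, H4, HEX, HEY.
  pose proof b2_pos. pose proof b3_pos. pose proof b4_pos. pose proof Hs_pos. pose proof cX_nn. pose proof Wc_ge1.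
  pose proof Bl_ge1. pose proof cA_pos. pose proof (pos_INR K).
  set (cD := delta * delta * Hs / nu).
  set (aX := mu * mu * (1 + mu * b3 * ((1 + 2 * INR N) * (INR K * INR K) * Hs))).
  set (aY := mu * (cD + 2 * b4)).
  set (a1 := 1 - mu * nu + mu * b4 * (2 * INR K * Hs)).
  set (a2 := mu * b2 * (1 - (1 - lam) / INR N)).
  set (a3 := mu * b2 * (lam * lam * Bl / INR N) + mu * b3 * ((1 + / (2 * INR N)) * (1 - / INR N))).
  set (a4 := mu * b4 * (1 - / INR N)).
  assert (HP : avg (fun n => Vf (step x n)) <= a1 * t1 + a2 * t2 + a3 * t3 + a4 * t4 + aY * Y + aX * X).
  { unfold Vf. rewrite (avg_ext _ (fun n => T1 (step x n) + (mu * b2) * T2 (step x n) + (mu * b3) * T3 (step x n) + (mu * b4) * T4 (step x n)))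
      by (intros; ring).
    rewrite !avg_add, !avg_scal.
    assert (P2 : 0 <= mu * b2) by nra. assert (P3 : 0 <= mu * b3) by nra. assert (P4 : 0 <= mu * b4) by nra.
    pose proof (Rmult_le_compat_l _ _ _ P2 H2). pose proof (Rmult_le_compat_l _ _ _ P3 H3).
    pose proof (Rmult_le_compat_l _ _ _ P4 H4).
    unfold a1, a2, a3, a4, aY, aX, cD.
    assert (E : forall u, u / INR N = u * / INR N) by (intros; reflexivity).
    eapply Rle_trans. 2:{ right. symmetry. instantiate (1 := 
      ((1 - mu * nu) * t1 + mu * (delta * delta * Hs / nu) * Y + mu * mu * X)
      + mu * b2 * ((1 - (1 - lam) / INR N) * t2 + lam * lam * Bl / INR N * t3)
      + mu * b3 * ((1 + / (2 * INR N)) * (1 - / INR N) * t3 + (1 + 2 * INR N) * (mu * mu * (INR K * INR K) * Hs) * X)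
      + mu * b4 * ((1 - / INR N) * t4 + 2 * Y + 2 * INR K * Hs * t1)). ring. }
    lra. }
  set (q := mu * Wc * cX).
  assert (Q1 : q <= nu / 2) by (unfold q; exact Hq1).
  assert (Q2 : q <= b4 / 2) by (unfold q; exact Hq2).
  assert (Q3 : q <= 1) by (unfold q; exact Hq3).
  assert (HaX : aX * cX <= mu * q).
  { unfold aX, q. unfold Wc in *.
    assert (0 <= b3 * ((1 + 2 * INR N) * (INR K * INR K) * Hs)).
    { apply Rmult_le_pos; [lra|]. apply Rmult_le_pos; [|lra]. pose proof (pos_INR N). nra. }
    assert (mu * b3 * ((1 + 2 * INR N) * (INR K * INR K) * Hs) <= b3 * ((1 + 2 * INR N) * (INR K * INR K) * Hs)) by nra.
    assert (0 <= mu * mu) by apply sqnn.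
    assert (mu * mu * (1 + mu * b3 * ((1 + 2 * INR N) * (INR K * INR K) * Hs)) <= mu * mu * (1 + b3 * (1 + 2 * INR N) * (INR K * INR K) * Hs)).
    { apply Rmult_le_compat_l; auto. nra. }
    replace (mu * (mu * (1 + b3 * (1 + 2 * INR N) * (INR K * INR K) * Hs) * cX)) with
      (mu * mu * (1 + b3 * (1 + 2 * INR N) * (INR K * INR K) * Hs) * cX) by ring.
    apply Rmult_le_compat_r; auto. }
  clearbody q.
  assert (HaXn : 0 <= aX).
  { unfold aX. apply Rmult_le_pos. apply sqnn. assert (0 <= b3 * ((1 + 2 * INR N) * (INR K * INR K) * Hs)).
    { apply Rmult_le_pos; [lra|]. apply Rmult_le_pos; [|lra]. pose proof (pos_INR N). nra. } nra. }
  assert (HaYn : 0 <= aY).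
  { unfold aY, cD. assert (0 <= delta * delta * Hs / nu). { apply Rmult_le_pos. pose proof (sqnn delta); nra. left; apply Rinv_0_lt_compat; lra. } nra. }
  set (aY' := aY + aX * cX).
  assert (HS2 : aX * X <= aX * cX * (Y + t1 + / INR N * t4)).
  { rewrite Rmult_assoc. apply Rmult_le_compat_l; auto. }
  assert (HS3 : aY' * Y <= aY' * (/ INR N * (t2 + Bl * t3))).
  { apply Rmult_le_compat_l; auto. unfold aY'. pose proof (Rmult_le_pos _ _ HaXn cX_nn). lra. }
  apply Rle_trans with ((a1 + aX * cX) * t1 + (a2 + aY' * / INR N) * t2 + (a3 + aY' * Bl * / INR N) * t3 + (a4 + aX * cX * / INR N) * t4).
  { eapply Rle_trans. apply HP.
    apply Rle_trans with (a1 * t1 + a2 * t2 + a3 * t3 + a4 * t4 + aY' * Y + aX * cX * (t1 + / INR N * t4)).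
    { unfold aY'. assert (aX * X <= aX * cX * Y + aX * cX * (t1 + / INR N * t4)) by (rewrite <- Rmult_plus_distr_l, <- Rplus_assoc; auto). lra. }
    apply Rle_trans with (a1 * t1 + a2 * t2 + a3 * t3 + a4 * t4 + aY' * (/ INR N * (t2 + Bl * t3)) + aX * cX * (t1 + / INR N * t4)).
    lra. right; ring. }
  assert (HV : rho * Vf x = rho * t1 + (rho * (mu * b2)) * t2 + (rho * (mu * b3)) * t3 + (rho * (mu * b4)) * t4).
  { unfold Vf. fold t1 t2 t3 t4. ring. }
  rewrite HV.
  pose proof rho_ge1 as R1. pose proof rho_ge2 as R2.
  assert (HiN : 0 < / INR N) by (apply Rinv_0_lt_compat; auto).
  assert (HaY' : aY' <= mu * cA).
  { assert (mu * cA = aY + mu) by (unfold aY, cA, cD; ring).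
    assert (mu * q <= mu * 1) by (apply Rmult_le_compat_l; lra). unfold aY'. lra. }
  apply lin4; auto.
  -
    unfold a1. assert (E : b4 * (2 * INR K * Hs) = nu / 4).
    { unfold b4. field. split. apply Rgt_not_eq; lra. apply Rgt_not_eq, INRK_pos. }
    assert (mu * b4 * (2 * INR K * Hs) = mu * (nu / 4)) by (rewrite Rmult_assoc, E; reflexivity).
    assert (mu * q <= mu * (nu / 2)) by (apply Rmult_le_compat_l; lra). lra.
  -
    assert (E : cA = b2 * (1 - lam) / 2) by (unfold b2; field; lra).
    apply Rle_trans with (mu * b2 * (1 - (1 - lam) / (2 * INR N))).
    + unfold a2. apply Rle_trans with (mu * b2 * (1 - (1 - lam) / INR N) + mu * cA * / INR N).
      apply Rplus_le_compat_l. apply Rmult_le_compat_r; lra.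
      right. rewrite E. field. lra.
    + rewrite (Rmult_comm rho). apply Rmult_le_compat_l; nra.
  -
    assert (E : b2 * (lam * lam * Bl) + Bl * cA = b3 * lam / 2) by (unfold b3; field; lra).
    assert (EN : (1 + / (2 * INR N)) * (1 - / INR N) <= 1 - / (2 * INR N)).
    { assert (E2 : (1 + / (2 * INR N)) * (1 - / INR N) = 1 - / (2 * INR N) - / (2 * INR N) * / INR N) by (field; lra).
      rewrite E2. assert (0 < / (2 * INR N) * / INR N) by (apply Rmult_lt_0_compat; [apply Rinv_0_lt_compat; lra|auto]). lra. }
    apply Rle_trans with (mu * b3 * (1 - (1 - lam) / (2 * INR N))).
    + unfold a3. apply Rle_trans with (mu * b2 * (lam * lam * Bl / INR N) + mu * b3 * (1 - / (2 * INR N)) + mu * cA * Bl * / INR N).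
      * assert (mu * b3 * ((1 + / (2 * INR N)) * (1 - / INR N)) <= mu * b3 * (1 - / (2 * INR N))) by (apply Rmult_le_compat_l; nra).
        assert (aY' * Bl * / INR N <= mu * cA * Bl * / INR N).
        { apply Rmult_le_compat_r; [lra|]. apply Rmult_le_compat_r; lra. }
        lra.
      * right. unfold Rdiv. 
        replace (mu * b2 * (lam * lam * Bl * / INR N) + mu * b3 * (1 - / (2 * INR N)) + mu * cA * Bl * / INR N)
          with (mu * (b2 * (lam * lam * Bl) + Bl * cA) * / INR N + mu * b3 * (1 - / (2 * INR N))) by ring.
        rewrite E. field. lra.
    + rewrite (Rmult_comm rho). apply Rmult_le_compat_l; nra.
  -
    apply Rle_trans with (mu * b4 * (1 - (1 - lam) / (2 * INR N))).
    + unfold a4. assert (aX * cX * / INR N <= mu * (b4 / 2) * / INR N).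
      { apply Rmult_le_compat_r; [lra|]. eapply Rle_trans; [apply HaX|]. apply Rmult_le_compat_l; lra. }
      assert (mu * b4 * (1 - / INR N) + mu * (b4 / 2) * / INR N <= mu * b4 * (1 - (1 - lam) / (2 * INR N))).
      { assert (E : mu * b4 * (1 - (1 - lam) / (2 * INR N)) - (mu * b4 * (1 - / INR N) + mu * (b4 / 2) * / INR N) = mu * b4 * lam / 2 * / INR N) by (field; lra).
        assert (0 <= mu * b4 * lam / 2 * / INR N). { apply Rmult_le_pos; [|lra]. assert (0 < mu * b4) by nra. nra. } lra. }
      lra.
    + rewrite (Rmult_comm rho). apply Rmult_le_compat_l; nra.
Qed.

Definition iter m s := vrd_iter N K M A h gam dQ gr mu m s.

Lemma iter_upd m s p n : (m < p)%nat -> iter m (upd s p n) = iter m s.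
Proof. induction m; intros Hp; simpl; auto.
  unfold iter in *. simpl. rewrite IHm by lia. unfold upd.
  destruct (Nat.eqb_spec (S m) p); [lia|reflexivity]. Qed.

Lemma iter_inv m s : inv (iter m s).
Proof. induction m; simpl. apply inv_init. apply (inv_step (iter m s)); auto. Qed.

Lemma iter_S m s : iter (S m) s = step (iter m s) (s (S m)).
Proof. reflexivity. Qed.

Lemma rho_pos : 0 < rho.
Proof. pose proof rho_ge1. pose proof INRN_pos.
  assert ((1 - lam) / (2 * INR N) <= 1 / 2).
  { unfold Rdiv. apply Rle_trans with ((1 - lam) * / 2). apply Rmult_le_compat_l. lra.
    assert (1 <= INR N) by (apply (le_INR 1); lia).
    apply Rinv_le_contravar; lra. lra. } lra. Qed.

Lemma Vf_nn x : T1 x <= Vf x.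
Proof. unfold Vf. pose proof (T2_nn x). pose proof (T3_nn x). pose proof (T4_nn x).
  pose proof b2_pos. pose proof b3_pos. pose proof b4_pos.
  assert (0 <= b2 * T2 x) by (apply Rmult_le_pos; lra).
  assert (0 <= b3 * T3 x) by (apply Rmult_le_pos; lra).
  assert (0 <= b4 * T4 x) by (apply Rmult_le_pos; lra).
  assert (0 <= mu * (b2 * T2 x + b3 * T3 x + b4 * T4 x)) by (apply Rmult_le_pos; lra). lra. Qed.

Lemma expect_V m : expect N m (fun s => Vf (iter m s)) <= rho ^ m * Vf vrd_init.
Proof. induction m.
  - change (Vf (iter 0 (fun _ => O)) <= 1 * Vf vrd_init). rewrite Rmult_1_l. apply Rle_refl.
  - simpl expect.
    rewrite (fsum_ext N _ (fun n => expect N m (fun s => Vf (step (iter m s) n)))).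
    2:{ intros n Hn. f_equal. apply functional_extensionality. intros s'. 
        rewrite iter_S, iter_upd by lia. unfold upd. rewrite Nat.eqb_refl. reflexivity. }
    rewrite <- (expect_swap N m (fun n s => Vf (step (iter m s) n))).
    apply Rle_trans with (expect N m (fun s => rho * Vf (iter m s))).
    apply expect_le; auto. intros s. apply lyap. apply iter_inv.
    rewrite expect_scal. simpl. pose proof rho_pos. rewrite Rmult_assoc. apply Rmult_le_compat_l; lra. Qed.

Lemma blocksq_T1 x k : (k < K)%nat -> blocksq (M k) (st_w x k) (wstar k) <= T1 x.
Proof. intros Hk. unfold T1. apply (dotb_le_dotf (ew x) k Hk). Qed.

Lemma main_bound i k : (k < K)%nat -> (0 < i)%nat ->
  expect N (i - 1) (fun s => blocksq (M k) (st_w (vrd_iter N K M A h gam dQ gr mu (i - 1) s) k) (wstar k))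
  <= rho ^ i * (Vf vrd_init / rho).
Proof. intros Hk Hi.
  apply Rle_trans with (expect N (i - 1) (fun s => Vf (iter (i - 1) s))).
  apply expect_le; auto. intros s. eapply Rle_trans. apply blocksq_T1; auto. apply Vf_nn.
  eapply Rle_trans. apply expect_V. pose proof rho_pos.
  replace i with (S (i - 1)) at 2 by lia. simpl. right. field. lra. Qed.

End Main.
Theorem corollary1
  (N K : nat) (M : nat -> nat)
  (h : nat -> bvec) (gam : nat -> R)
  (Q dQ : R -> R -> R)
  (r : nat -> vec -> R) (gr : nat -> vec -> vec)
  (A : nat -> nat -> R) (E : nat -> nat -> Prop)
  (L delta eta nu lam : R) (wstar : bvec) :
  (0 < N)%nat ->
  (forall g z, derivable_pt_lim (fun y => Q y g) z (dQ z g)) ->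
  0 < L -> 0 < delta ->
  (forall n w1 w2, (n < N)%nat ->
     normf K M (fun k j => dQ (hTw K M (h n) w1) (gam n) * h n k j
                         - dQ (hTw K M (h n) w2) (gam n) * h n k j)
     <= L * normf K M (bsub w1 w2)) ->
  (forall n z1 z2, (n < N)%nat ->
     Rabs (dQ z1 (gam n) - dQ z2 (gam n)) <= delta * Rabs (z1 - z2)) ->
  (forall k, (k < K)%nat -> is_block_gradient (M k) (r k) (gr k)) ->
  (forall w1 w2 t, 0 <= t <= 1 ->
     rfull K r (fun k j => t * w1 k j + (1 - t) * w2 k j)
     <= t * rfull K r w1 + (1 - t) * rfull K r w2) ->
  (forall w1 w2,
     normf K M (fun k j => gr k (w1 k) j - gr k (w2 k) j)
     <= eta * normf K M (bsub w1 w2)) ->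
  0 < nu ->
  (forall w1 w2,
     dotf K M (bsub (gradR N K M h gam dQ gr w1) (gradR N K M h gam dQ gr w2))
              (bsub w1 w2)
     >= nu * dotf K M (bsub w1 w2) (bsub w1 w2)) ->
  (forall w, Rrisk N K M h gam Q r wstar <= Rrisk N K M h gam Q r w) ->
  strongly_connected K E ->
  (forall l k, (l < K)%nat -> (k < K)%nat -> 0 <= A l k) ->
  (forall l k, (l < K)%nat -> (k < K)%nat -> 0 < A l k -> l = k \/ E l k) ->
  (forall l k, (l < K)%nat -> (k < K)%nat -> A l k = A k l) ->
  (forall l, (l < K)%nat -> fsum K (fun k => A l k) = 1) ->
  (exists k, (k < K)%nat /\ 0 < A k k) ->
  second_largest_eig_mag K A lam ->
  0 < lam < 1 ->
  exists mubar, 0 < mubar /\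
    forall mu, 0 < mu <= mubar ->
      exists C : R, forall k i, (k < K)%nat -> (0 < i)%nat ->
        expect N (i - 1)
          (fun s => blocksq (M k)
                      (st_w (vrd_iter N K M A h gam dQ gr mu (i - 1) s) k)
                      (wstar k))
        <= (Rmax (1 - (1 - lam) / (2 * INR N)) (1 - mu * nu / 4)) ^ i * C.
Proof.
  intros HN HQ HL Hd HLip HdQ Hgr Hconv Hgrl Hnu Hsc Hmin Hconn HAnn HAnb Hsym Hrow Hdiag Heig Hlam.
  assert (HK : (0 < K)%nat) by (destruct Heig as (V & e & p & _ & Hp & _); lia).
  pose proof (spectral K A lam Heig Hlam Hsym Hrow) as Hspec.
  pose proof (grad_zero N K M h gam Q dQ r gr wstar HN HQ Hgr Hmin) as Hgz.
  pose proof (Wc_ge1 N K M h HK lam delta nu Hlam Hnu) as HW.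
  pose proof (cX_nn N K M h delta eta) as HX.
  pose proof (b4_pos N K M h HK nu Hnu) as HB.
  set (W := Wc N K M h lam delta nu) in *. set (X := cX N K M h delta eta) in *. set (B4 := b4 N K M h nu) in *.
  set (Z := 2 / nu + 2 / B4 + 1).
  assert (HZ2 : 0 < 2 / nu) by (apply Rdiv_lt_0_compat; lra).
  assert (HZ3 : 0 < 2 / B4) by (apply Rdiv_lt_0_compat; lra).
  assert (HZ : 0 < Z) by (unfold Z; lra).
  assert (HWX : 0 <= W * X) by (apply Rmult_le_pos; lra).
  assert (HD : 0 < 1 + W * X * Z) by (pose proof (Rmult_le_pos _ _ HWX (Rlt_le _ _ HZ)); lra).
  exists (/ (1 + W * X * Z)). split. apply Rinv_0_lt_compat; auto.
  intros mu [Hmu Hmub].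
  assert (Hm1 : mu * (1 + W * X * Z) <= 1).
  { apply Rmult_le_reg_r with (/ (1 + W * X * Z)). apply Rinv_0_lt_compat; auto.
    rewrite Rmult_assoc, Rinv_r by lra. lra. }
  set (q := mu * W * X).
  assert (Hq0 : 0 <= q) by (unfold q; rewrite Rmult_assoc; apply Rmult_le_pos; lra).
  assert (HqZ : q * Z <= 1) by (unfold q; nra).
  assert (Hmu1 : mu <= 1) by (pose proof (Rmult_le_pos _ _ HWX (Rlt_le _ _ HZ)); nra).
  assert (Hq1 : q <= nu / 2).
  { assert (q * (2 / nu) <= 1) by (unfold Z in HqZ; nra).
    apply Rmult_le_reg_r with (2 / nu); auto. replace (nu / 2 * (2 / nu)) with 1 by (field; lra). lra. }
  assert (Hq2 : q <= B4 / 2).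
  { assert (q * (2 / B4) <= 1) by (unfold Z in HqZ; nra).
    apply Rmult_le_reg_r with (2 / B4); auto. replace (B4 / 2 * (2 / B4)) with 1 by (field; lra). lra. }
  assert (Hq3 : q <= 1) by (unfold Z in HqZ; nra).
  exists (Vf N K M h mu lam wstar delta nu vrd_init / rho N mu lam nu).
  intros k i Hk Hi.
  exact (main_bound N K M h gam dQ gr A mu Hrow HK Hsym lam Hspec wstar delta eta nu HN HdQ Hgrl Hsc Hgz
           Hlam Hmu Hnu Hmu1 Hq1 Hq2 Hq3 i k Hk Hi).
Qed.
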